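(* Let $A,B:(0,\infty)\to(0,\infty)$ be the functions $A=\tfrac r3\sqrt{1-r^{-3}}$, $B=\tfrac r{\sqrt3}$, where $r=r(t)\in(1,\infty)$ is determined by $\dot A=\tfrac12(1-A^2/B^2)$, $\dot B=A/B$ with $r\to1$ as $t\to0$. Consider the ODE system $$\dot f_+=\frac{f_+}{A}\Bigl(1-\frac{A^2}{B^2}-f_+\Bigr)+f_-^2\frac{A}{B^2},\qquad \dot f_-=\frac{2f_-}{A}(f_+-1).$$ If a solution $(f_+,f_-)$ lies in $\mathcal{R}_0=\{\tfrac23<f_+<1,\ 0<f_-<1\}$ at some time $t_0>0$, then it exists for all $t\ge t_0$ and converges to $(\tfrac23,0)$, with $$f_+=\tfrac23+\mu t^{-2}+O(t^{-3}),\qquad f_-=\nu t^{-2}+O(t^{-3})\qquad (t\to\infty)$$ for some non-zero real numbers $\mu,\nu$.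
   Context: $A$ and $B$ are the metric coefficients of the Bryant–Salamon $G_2$-metric on $\mathbf{S}(S^3)$; the system is the $\mathrm{SU}(2)^3$-invariant $G_2$-instanton equation for $\mathrm{SU}(2)$-connections $f_+\sum_iE_i\otimes e_i^++f_-\sum_iE_i\otimes e_i^-$, and $(\tfrac23,0)$ corresponds to the nearly-Kähler instanton $A^{nK}$. *)

(* Defs.v *)
From Stdlib Require Import Reals Lra.
From Coquelicot Require Import Coquelicot.
Open Scope R_scope.

Definition A_of (r : R -> R) (t : R) : R := r t / 3 * sqrt (1 - / (r t ^ 3)).
Definition B_of (r : R -> R) (t : R) : R := r t / sqrt 3.

Definition solves_at (r : R -> R) (fp fm : R -> R) (t : R) : Prop :=
  is_derive fp t
    (fp t / A_of r t * (1 - A_of r t ^ 2 / B_of r t ^ 2 - fp t)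
     + fm t ^ 2 * (A_of r t / B_of r t ^ 2)) /\
  is_derive fm t (2 * fm t / A_of r t * (fp t - 1)).

Definition has_asymptotics (fp fm : R -> R) : Prop :=
  exists mu nu : R, mu <> 0 /\ nu <> 0 /\
  exists C T : R, 0 < T /\ forall t, T <= t ->
    Rabs (fp t - 2/3 - mu / t ^ 2) <= C / t ^ 3 /\
    Rabs (fm t - nu / t ^ 2) <= C / t ^ 3.

(* Main.v *)
Require Import Defs.
From Stdlib Require Import Reals Lra Psatz Classical.
From Coquelicot Require Import Coquelicot.
Open Scope R_scope.

Ltac drw H := match type of H with is_derive ?f ?x ?l =>
  replace (Derive (fun y => f y) x) with l by (symmetry; apply is_derive_unique; exact H) end.

Lemma is_derive_cont (h : R -> R) x l : is_derive h x l -> continuous h x.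
Proof. intro H. apply (ex_derive_continuous (V:=R_NormedModule)). eexists; eauto. Qed.

Lemma mono_incr (h d : R -> R) a b : a <= b ->
  (forall x, a <= x <= b -> is_derive h x (d x)) ->
  (forall x, a <= x <= b -> 0 <= d x) -> h a <= h b.
Proof.
  intros Hab Hd Hpos.
  destruct (MVT_gen h a b d) as [c [Hc Heq]].
  - intros x Hx. apply Hd. rewrite Rmin_left in Hx by lra. rewrite Rmax_right in Hx by lra. lra.
  - intros x Hx. apply continuity_pt_filterlim. apply (is_derive_cont _ _ (d x)). apply Hd.
    rewrite Rmin_left in Hx by lra. rewrite Rmax_right in Hx by lra. lra.
  - rewrite Rmin_left in Hc by lra. rewrite Rmax_right in Hc by lra.
    assert (0 <= d c) by (apply Hpos; lra). nra.
Qed.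

Lemma mono_decr (h d : R -> R) a b : a <= b ->
  (forall x, a <= x <= b -> is_derive h x (d x)) ->
  (forall x, a <= x <= b -> d x <= 0) -> h b <= h a.
Proof.
  intros Hab Hd Hneg.
  assert (- h a <= - h b); [|lra].
  apply (mono_incr (fun x => - h x) (fun x => - d x)); auto.
  - intros x Hx. apply (is_derive_opp h x (d x)). auto.
  - intros x Hx. specialize (Hneg x Hx). lra.
Qed.

Lemma cont_pos (g : R -> R) t : continuous g t -> 0 < g t ->
  exists d, 0 < d /\ forall s, Rabs (s - t) < d -> 0 < g s.
Proof.
  intros Hc Hp.
  assert (H := proj1 (filterlim_locally g (g t)) Hc (mkposreal _ Hp)).
  destruct H as [d Hd]. exists d. split; [apply cond_pos|].
  intros s Hs. specialize (Hd s Hs). simpl in Hd.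
  unfold ball in Hd; simpl in Hd; unfold AbsRing_ball, abs, minus, plus, opp in Hd; simpl in Hd.
  apply Rabs_def2 in Hd. lra.
Qed.

Lemma real_ind (Q : R -> Prop) a :
  (forall t, a <= t -> (forall s, a <= s < t -> Q s) -> Q t) ->
  (forall t, a <= t -> Q t -> exists d, 0 < d /\ forall s, t <= s < t + d -> Q s) ->
  forall t, a <= t -> Q t.
Proof.
  intros Hstep Hopen b Hb.
  apply NNPP; intro Hnb.
  set (E := fun x => a <= x <= b /\ forall s, a <= s < x -> Q s).
  assert (HE : exists x, E x) by (exists a; split; [lra| intros; lra]).
  assert (HB : bound E) by (exists b; intros x [Hx _]; lra).
  destruct (completeness E HB HE) as [m [Hub Hlub]].
  assert (Ham : a <= m) by (apply Hub; split; [lra| intros; lra]).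
  assert (Hmb : m <= b) by (apply Hlub; intros x [Hx _]; lra).
  assert (Hbelow : forall s, a <= s < m -> Q s).
  { intros s Hs. apply NNPP; intro Hns.
    assert (m <= s); [|lra].
    apply Hlub. intros x [Hx Hq]. destruct (Rle_lt_dec x s) as [|Hlt]; auto.
    exfalso. apply Hns. apply Hq. lra. }
  assert (Qm : Q m) by (apply Hstep; auto).
  destruct (Req_dec m b) as [->|Hne]; [contradiction|].
  destruct (Hopen m Ham Qm) as [d [Hd Hq]].
  assert (E (Rmin b (m + d/2))).
  { split. split. apply Rmin_glb; lra. apply Rmin_l.
    intros s Hs. destruct (Rlt_le_dec s m). apply Hbelow; lra.
    apply Hq. split; auto. assert (Rmin b (m + d/2) <= m + d/2) by apply Rmin_r. lra. }
  assert (Rmin b (m + d/2) <= m) by (apply Hub; auto).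
  revert H0. apply Rlt_not_le. apply Rmin_glb_lt; lra.
Qed.

Lemma persist (w dw : R -> R) K t0 t : 0 <= K -> t0 <= t -> 0 < w t0 ->
  continuous w t ->
  (forall s, t0 <= s < t -> is_derive w s (dw s) /\ - K * w s <= dw s) ->
  0 < w t.
Proof.
  intros HK Ht Hw0 Hc Hd.
  destruct (Req_dec t0 t) as [<-|Hne]; auto.
  set (m := w t0 * exp (K * (t0 - t))).
  assert (Hm : 0 < m) by (apply Rmult_lt_0_compat; auto; apply exp_pos).
  assert (Hlow : forall s, t0 <= s < t -> m <= w s).
  { intros s Hs.
    assert (H1 : w t0 * exp (K * t0) <= w s * exp (K * s)).
    { apply (mono_incr (fun x => w x * exp (K * x)) (fun x => (dw x + K * w x) * exp (K * x))).
      lra.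
      intros x Hx. destruct (Hd x ltac:(lra)) as [Hdx _].
      auto_derive. eexists; eauto.
      drw Hdx. ring.
      intros x Hx. destruct (Hd x ltac:(lra)) as [_ Hb].
      apply Rmult_le_pos; [lra| left; apply exp_pos]. }
    unfold m. 
    assert (exp (K * (t0 - t)) = exp (K * t0) * exp (- (K * t))) by (rewrite <- exp_plus; f_equal; ring).
    rewrite H.
    assert (Hs' : w t0 * exp (K * t0) * exp (-(K*s)) <= w s).
    { replace (w s) with (w s * exp (K * s) * exp (- (K * s))).
      apply Rmult_le_compat_r; [left; apply exp_pos| auto].
      rewrite Rmult_assoc, <- exp_plus. replace (K * s + - (K * s)) with 0 by ring. rewrite exp_0; ring. }
    assert (exp (- (K * t)) <= exp (- (K * s))).
    { destruct (Req_dec K 0) as [->|]. right. f_equal. ring.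
      left. apply exp_increasing. nra. }
    assert (0 <= w t0 * exp (K * t0)) by (apply Rmult_le_pos; [lra|left; apply exp_pos]).
    nra. }
  apply NNPP; intro Hn.
  assert (Hc' : continuous (fun x => w x - m / 2) t).
  { apply (continuous_minus w (fun _ => m/2)); auto. apply continuous_const. }
  destruct (Rle_lt_dec (w t) (m/2)) as [Hle|Hgt]; [|lra].
  assert (Hneg : 0 < - (w t - m) ) by lra.
  destruct (cont_pos (fun x => - (w x - m)) t) as [d [Hd0 Hdd]].
  { apply (continuous_opp (fun x => w x - m)). apply (continuous_minus w (fun _ => m)); auto. apply continuous_const. }
  auto.
  set (s := Rmax t0 (t - d/2)).
  assert (Hs : t0 <= s < t). { unfold s. split. apply Rmax_l. apply Rmax_lub_lt; lra. }
  assert (Rabs (s - t) < d).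
  { rewrite Rabs_left by lra. unfold s. assert (t - d/2 <= Rmax t0 (t - d/2)) by apply Rmax_r. lra. }
  specialize (Hdd s H). specialize (Hlow s Hs). lra.
Qed.

Lemma is_derive_sub (f g : R -> R) x a b : is_derive f x a -> is_derive g x b ->
  is_derive (fun y => f y - g y) x (a - b).
Proof. intros Ha Hb. exact (is_derive_minus f g x a b Ha Hb). Qed.

Lemma is_derive_c (c x : R) : is_derive (fun _ : R => c) x 0.
Proof. apply (is_derive_const (K:=R_AbsRing) (V:=R_NormedModule) c x). Qed.

Lemma prim_deriv (h : R -> R) a : (forall s, continuous h s) ->
  forall t, is_derive (fun t => RInt h a t) t (h t).
Proof.
  intros Hc t. apply (is_derive_RInt h (fun b => RInt h a b) a t); auto.
  exists (mkposreal 1 Rlt_0_1). intros y _. apply (RInt_correct (V:=R_CompleteNormedModule)).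
  apply (ex_RInt_continuous (V:=R_CompleteNormedModule)). intros; apply Hc.
Qed.

Lemma prim_deriv' (h : R -> R) a p : (forall s, continuous h s) ->
  forall t, is_derive (fun t => p + RInt h a t) t (h t).
Proof.
  intros Hc t. 
  assert (H := is_derive_plus (fun _ : R => p) (fun t => RInt h a t) t zero (h t) (is_derive_const p t) (prim_deriv h a Hc t)).
  simpl in H. unfold plus, zero in H; simpl in H. 
  replace (h t) with (0 + h t) by ring. exact H.
Qed.

Lemma lip_of_deriv (f d : R -> R) M : (forall x, is_derive f x (d x)) ->
  (forall x, Rabs (d x) <= M) -> forall t s, Rabs (f t - f s) <= M * Rabs (t - s).
Proof.
  intros Hd HM t s.
  destruct (MVT_gen f s t d) as [c [_ Hc]].
  - intros; apply Hd.
  - intros; apply continuity_pt_filterlim. apply (is_derive_cont _ _ (d x)). apply Hd.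
  - rewrite Hc, Rabs_mult. apply Rmult_le_compat_r. apply Rabs_pos. apply HM.
Qed.

Lemma grow_bound (h d : R -> R) t0 c K : 0 < K -> 0 <= c -> h t0 = 0 ->
  (forall x, is_derive h x (d x)) ->
  (forall x, Rabs (d x) <= c * K * exp (K * Rabs (x - t0))) ->
  forall t, Rabs (h t) <= c * exp (K * Rabs (t - t0)).
Proof.
  intros HK Hc H0 Hd Hb t.
  destruct (Rle_dec t0 t) as [Ht|Ht].
  - rewrite (Rabs_right (t - t0)) by lra.
    assert (A1 : c * exp (K * (t0 - t0)) - h t0 <= c * exp (K * (t - t0)) - h t).
    { apply (mono_incr (fun x => c * exp (K * (x - t0)) - h x) (fun x => c * K * exp (K * (x - t0)) - d x)); auto.
      intros x Hx. auto_derive. eexists; apply Hd. drw (Hd x). unfold Rminus; ring.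
      intros x Hx. specialize (Hb x). rewrite (Rabs_right (x - t0)) in Hb by lra.
      apply Rabs_le_between in Hb. lra. }
    assert (A2 : c * exp (K * (t0 - t0)) + h t0 <= c * exp (K * (t - t0)) + h t).
    { apply (mono_incr (fun x => c * exp (K * (x - t0)) + h x) (fun x => c * K * exp (K * (x - t0)) + d x)); auto.
      intros x Hx. auto_derive. eexists; apply Hd. drw (Hd x). unfold Rminus; ring.
      intros x Hx. specialize (Hb x). rewrite (Rabs_right (x - t0)) in Hb by lra.
      apply Rabs_le_between in Hb. lra. }
    replace (t0 - t0) with 0 in * by ring. rewrite Rmult_0_r, exp_0 in *.
    apply Rabs_le. lra.
  - rewrite (Rabs_left (t - t0)) by lra.
    assert (A1 : c * exp (K * (t0 - t0)) - h t0 <= c * exp (K * (t0 - t)) - h t).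
    { apply (mono_decr (fun x => c * exp (K * (t0 - x)) - h x) (fun x => - c * K * exp (K * (t0 - x)) - d x)); try lra.
      intros x Hx. auto_derive. eexists; apply Hd. drw (Hd x). unfold Rminus; ring.
      intros x Hx. specialize (Hb x). rewrite (Rabs_left1 (x - t0)) in Hb by lra.
      replace (- (x - t0)) with (t0 - x) in Hb by ring.
      apply Rabs_le_between in Hb. lra. }
    assert (A2 : c * exp (K * (t0 - t0)) + h t0 <= c * exp (K * (t0 - t)) + h t).
    { apply (mono_decr (fun x => c * exp (K * (t0 - x)) + h x) (fun x => - c * K * exp (K * (t0 - x)) + d x)); try lra.
      intros x Hx. auto_derive. eexists; apply Hd. drw (Hd x). unfold Rminus; ring.
      intros x Hx. specialize (Hb x). rewrite (Rabs_left1 (x - t0)) in Hb by lra.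
      replace (- (x - t0)) with (t0 - x) in Hb by ring.
      apply Rabs_le_between in Hb. lra. }
    replace (t0 - t0) with 0 in * by ring. rewrite Rmult_0_r, exp_0 in *.
    replace (- (t - t0)) with (t0 - t) by ring.
    apply Rabs_le. lra.
Qed.


Lemma pow2_ge n : INR n <= 2 ^ n.
Proof.
  induction n. simpl; lra.
  rewrite S_INR. simpl. assert (1 <= 2 ^ n) by (apply pow_R1_Rle; lra). lra.
Qed.

Lemma pow2_pos n : 0 < 2 ^ n.
Proof. apply pow_lt; lra. Qed.

Lemma exists_small B eps : 0 < eps -> exists n, B / 2 ^ n < eps.
Proof.
  intros He. destruct (archimed (Rabs B / eps)) as [H1 _].
  destruct (INR_unbounded (Rabs B / eps)) as [n Hn].
  exists n. pose proof (pow2_ge n). pose proof (pow2_pos n).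
  assert (Rabs B / eps < 2 ^ n) by lra.
  apply (Rmult_lt_compat_r eps) in H2; auto.
  unfold Rdiv in H2. rewrite Rmult_assoc, Rinv_l in H2 by lra.
  apply (Rmult_lt_reg_r (2 ^ n)); auto. unfold Rdiv. rewrite Rmult_assoc, Rinv_l by lra.
  pose proof (Rle_abs B). lra.
Qed.

Lemma small_zero a B : (forall n, Rabs a <= B / 2 ^ n) -> a = 0.
Proof.
  intros H. apply NNPP; intro Hne.
  assert (Hp : 0 < Rabs a) by (apply Rabs_pos_lt; auto).
  destruct (exists_small B (Rabs a) Hp) as [n Hn]. specialize (H n). lra.
Qed.

Lemma lim_le_abs (u v : nat -> R) (a b B : R) n0 : is_lim_seq u a -> is_lim_seq v b ->
  (forall n, (n0 <= n)%nat -> Rabs (u n) + Rabs (v n) <= B) -> Rabs a + Rabs b <= B.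
Proof.
  intros Hu Hv HB. apply Rnot_lt_le; intro Hlt.
  set (dl := (Rabs a + Rabs b - B) / 2).
  assert (Hd : dl > 0) by (unfold dl; lra).
apply (proj1 (is_lim_seq_Reals u a)) in Hu. apply (proj1 (is_lim_seq_Reals v b)) in Hv.
  destruct (Hu dl Hd) as [N1 HN1]. destruct (Hv dl Hd) as [N2 HN2].
  set (m := max n0 (max N1 N2)).
  assert (H1 := HN1 m ltac:(unfold m; lia)). assert (H2 := HN2 m ltac:(unfold m; lia)).
  assert (H3 := HB m ltac:(unfold m; lia)).
  unfold Rdist in *.
  assert (Rabs a <= Rabs (u m) + Rabs (u m - a)).
  { replace a with (u m - (u m - a)) at 1 by ring. eapply Rle_trans. apply Rabs_triang.
    rewrite Rabs_Ropp. lra. }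
  assert (Rabs b <= Rabs (v m) + Rabs (v m - b)).
  { replace b with (v m - (v m - b)) at 1 by ring. eapply Rle_trans. apply Rabs_triang.
    rewrite Rabs_Ropp. lra. }
  unfold dl in *. lra.
Qed.

Lemma lip_cont (f : R -> R) M : 0 <= M -> (forall t s, Rabs (f t - f s) <= M * Rabs (t - s)) ->
  forall t, continuous f t.
Proof.
  intros HM Hl t. apply (proj2 (filterlim_locally f (f t))). intro eps.
  assert (Hp : 0 < eps / (M + 1)) by (apply Rdiv_lt_0_compat; [apply cond_pos| lra]).
  exists (mkposreal _ Hp). intros y Hy.
  unfold ball in *; simpl in *; unfold AbsRing_ball, abs, minus, plus, opp in *; simpl in *.
  specialize (Hl y t). 
  assert (M * Rabs (y + - t) <= M * (eps / (M + 1))) by (apply Rmult_le_compat_l; lra).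
  assert (M * (eps / (M + 1)) < eps).
  { unfold Rdiv. pose proof (cond_pos eps). 
    apply (Rmult_lt_reg_r (M+1)); [lra|]. rewrite Rmult_assoc, Rmult_assoc, Rinv_l by lra. nra. }
  unfold Rminus in Hl. lra.
Qed.

Definition pstep (F1 F2 : R -> R -> R -> R) t0 p q (fg : (R -> R) * (R -> R)) :=
  (fun t => p + RInt (fun s => F1 s (fst fg s) (snd fg s)) t0 t,
   fun t => q + RInt (fun s => F2 s (fst fg s) (snd fg s)) t0 t).

Fixpoint pit F1 F2 t0 p q n : (R -> R) * (R -> R) :=
  match n with
  | O => (fun _ => p, fun _ => q)
  | S n => pstep F1 F2 t0 p q (pit F1 F2 t0 p q n)
  end.

Lemma picard (F1 F2 : R -> R -> R -> R) (t0 p q L M : R) :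
  0 < L -> 0 <= M ->
  (forall s x y, Rabs (F1 s x y) <= M) -> (forall s x y, Rabs (F2 s x y) <= M) ->
  (forall s x y x' y', Rabs (F1 s x y - F1 s x' y') <= L * (Rabs (x - x') + Rabs (y - y'))) ->
  (forall s x y x' y', Rabs (F2 s x y - F2 s x' y') <= L * (Rabs (x - x') + Rabs (y - y'))) ->
  (forall f g : R -> R, (forall s, continuous f s) -> (forall s, continuous g s) ->
     forall s, continuous (fun s => F1 s (f s) (g s)) s) ->
  (forall f g : R -> R, (forall s, continuous f s) -> (forall s, continuous g s) ->
     forall s, continuous (fun s => F2 s (f s) (g s)) s) ->
  exists f g : R -> R, f t0 = p /\ g t0 = q /\
    forall t, is_derive f t (F1 t (f t) (g t)) /\ is_derive g t (F2 t (f t) (g t)).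
Proof.
  intros HL HM HB1 HB2 HL1 HL2 HC1 HC2.
  set (X := fun n => fst (pit F1 F2 t0 p q n)).
  set (Y := fun n => snd (pit F1 F2 t0 p q n)).
  assert (HXS : forall n t, X (S n) t = p + RInt (fun s => F1 s (X n s) (Y n s)) t0 t) by reflexivity.
  assert (HYS : forall n t, Y (S n) t = q + RInt (fun s => F2 s (X n s) (Y n s)) t0 t) by reflexivity.
  assert (Hcont : forall n s, continuous (X n) s /\ continuous (Y n) s).
  { induction n; intro s.
    - split; apply continuous_const.
    - assert (Hc1 : forall s, continuous (X n) s) by (intro; apply IHn).
      assert (Hc2 : forall s, continuous (Y n) s) by (intro; apply IHn).
      split.
      + apply (is_derive_cont _ _ _ (prim_deriv' _ t0 p (HC1 _ _ Hc1 Hc2) s)).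
      + apply (is_derive_cont _ _ _ (prim_deriv' _ t0 q (HC2 _ _ Hc1 Hc2) s)). }
  assert (Hder : forall n t, is_derive (X (S n)) t (F1 t (X n t) (Y n t)) /\
                             is_derive (Y (S n)) t (F2 t (X n t) (Y n t))).
  { intros n t.
    assert (Hc1 : forall s, continuous (X n) s) by (intro; apply Hcont).
    assert (Hc2 : forall s, continuous (Y n) s) by (intro; apply Hcont).
    split.
    - apply (prim_deriv' (fun s => F1 s (X n s) (Y n s)) t0 p (HC1 _ _ Hc1 Hc2) t).
    - apply (prim_deriv' (fun s => F2 s (X n s) (Y n s)) t0 q (HC2 _ _ Hc1 Hc2) t). }
  assert (Hinit : forall n, X n t0 = p /\ Y n t0 = q).
  { intros [|n]. split; reflexivity.
    rewrite HXS, HYS, !RInt_point. unfold zero; simpl. split; ring. }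
  set (K := 4 * L). set (C0 := 2 * M / K).
  assert (HK : 0 < K) by (unfold K; lra).
  assert (HC0 : 0 <= C0) by (unfold C0; apply Rmult_le_pos; [lra| left; apply Rinv_0_lt_compat; lra]).
  set (E := fun t => exp (K * Rabs (t - t0))).
  assert (HE : forall t, 0 < E t) by (intro; apply exp_pos).
  assert (Hdiff : forall n t, Rabs (X (S n) t - X n t) + Rabs (Y (S n) t - Y n t) <= C0 * E t / 2 ^ n).
  { induction n; intro t.
    - simpl pow. rewrite Rdiv_1_r.
      assert (H1 : Rabs (X 1%nat t - X 1%nat t0) <= M * Rabs (t - t0)).
      { apply (lip_of_deriv _ (fun x => F1 x (X 0%nat x) (Y 0%nat x))). intro; apply Hder. intro; apply HB1. }
      assert (H2 : Rabs (Y 1%nat t - Y 1%nat t0) <= M * Rabs (t - t0)).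
      { apply (lip_of_deriv _ (fun x => F2 x (X 0%nat x) (Y 0%nat x))). intro; apply Hder. intro; apply HB2. }
      rewrite (proj1 (Hinit 1%nat)) in H1. rewrite (proj2 (Hinit 1%nat)) in H2.
      assert (X 0%nat t = p /\ Y 0%nat t = q) as [-> ->] by (split; reflexivity).
      assert (H3 : K * Rabs (t - t0) <= E t) by (unfold E; pose proof (exp_ineq1_le (K * Rabs (t - t0))); lra).
      assert (C0 * K = 2 * M) by (unfold C0; field; lra).
      assert (2 * M * Rabs (t - t0) <= C0 * E t).
      { replace (2 * M * Rabs (t - t0)) with (C0 * (K * Rabs (t - t0))) by (rewrite <- H; ring).
        apply Rmult_le_compat_l; auto. }
      lra.
    - set (c := L * C0 / (K * 2 ^ n)).
      assert (Hc : 0 <= c).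
      { unfold c. apply Rmult_le_pos. apply Rmult_le_pos; lra.
        left. apply Rinv_0_lt_compat. apply Rmult_lt_0_compat; auto. apply pow2_pos. }
      assert (Hck : c * K = L * C0 / 2 ^ n) by (unfold c; field; repeat split; first [apply Rgt_not_eq, pow2_pos | lra]).
      assert (G1 : Rabs (X (S (S n)) t - X (S n) t) <= c * E t).
      { apply (grow_bound (fun t => X (S (S n)) t - X (S n) t)
          (fun x => F1 x (X (S n) x) (Y (S n) x) - F1 x (X n x) (Y n x)) t0 c K); auto.
        - rewrite (proj1 (Hinit (S (S n)))), (proj1 (Hinit (S n))). ring.
        - intro x. apply is_derive_sub; apply Hder.
        - intro x. eapply Rle_trans. apply HL1. rewrite Hck.
          replace (L * C0 / 2 ^ n * exp (K * Rabs (x - t0))) with (L * (C0 * E x / 2 ^ n)) by (unfold E; field; apply Rgt_not_eq, pow2_pos).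
          apply Rmult_le_compat_l; [lra|]. apply IHn. }
      assert (G2 : Rabs (Y (S (S n)) t - Y (S n) t) <= c * E t).
      { apply (grow_bound (fun t => Y (S (S n)) t - Y (S n) t)
          (fun x => F2 x (X (S n) x) (Y (S n) x) - F2 x (X n x) (Y n x)) t0 c K); auto.
        - rewrite (proj2 (Hinit (S (S n)))), (proj2 (Hinit (S n))). ring.
        - intro x. apply is_derive_sub; apply Hder.
        - intro x. eapply Rle_trans. apply HL2. rewrite Hck.
          replace (L * C0 / 2 ^ n * exp (K * Rabs (x - t0))) with (L * (C0 * E x / 2 ^ n)) by (unfold E; field; apply Rgt_not_eq, pow2_pos).
          apply Rmult_le_compat_l; [lra|]. apply IHn. }
      assert (2 * c * E t = C0 * E t / 2 ^ S n).
      { unfold c, K. simpl pow. field. repeat split; first [apply Rgt_not_eq, pow2_pos | lra]. }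
      lra. }

  assert (Htail : forall n j t, Rabs (X (n + j)%nat t - X n t) + Rabs (Y (n + j)%nat t - Y n t)
                               <= 2 * C0 * E t * (/ 2 ^ n - / 2 ^ (n + j))).
  { intros n j t. induction j.
    - rewrite Nat.add_0_r. unfold Rminus. rewrite !Rplus_opp_r, Rabs_R0. lra.
    - rewrite Nat.add_succ_r.
      assert (H1 := Hdiff (n + j)%nat t).
      assert (Rabs (X (S (n + j)) t - X n t) <= Rabs (X (S (n + j)) t - X (n + j)%nat t) + Rabs (X (n + j)%nat t - X n t)).
      { replace (X (S (n + j)) t - X n t) with ((X (S (n + j)) t - X (n + j)%nat t) + (X (n + j)%nat t - X n t)) by ring. apply Rabs_triang. }
      assert (Rabs (Y (S (n + j)) t - Y n t) <= Rabs (Y (S (n + j)) t - Y (n + j)%nat t) + Rabs (Y (n + j)%nat t - Y n t)).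
      { replace (Y (S (n + j)) t - Y n t) with ((Y (S (n + j)) t - Y (n + j)%nat t) + (Y (n + j)%nat t - Y n t)) by ring. apply Rabs_triang. }
      assert (2 * C0 * E t * (/ 2 ^ n - / 2 ^ (n + j)) + C0 * E t / 2 ^ (n + j) = 2 * C0 * E t * (/ 2 ^ n - / 2 ^ S (n + j))).
      { simpl pow. field. split; apply Rgt_not_eq, pow2_pos. }
      lra. }
  assert (Htail' : forall n m t, (n <= m)%nat -> Rabs (X m t - X n t) + Rabs (Y m t - Y n t) <= 2 * C0 * E t / 2 ^ n).
  { intros n m t Hnm. replace m with (n + (m - n))%nat by lia.
    eapply Rle_trans. apply Htail. 
    assert (0 < / 2 ^ (n + (m - n))) by (apply Rinv_0_lt_compat, pow2_pos).
    assert (0 <= 2 * C0 * E t) by (apply Rmult_le_pos; [lra| left; apply HE]).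
    unfold Rdiv. nra. }
  assert (Hcauchy : forall t, ex_finite_lim_seq (fun n => X n t) /\ ex_finite_lim_seq (fun n => Y n t)).
  { intro t. split; apply ex_lim_seq_cauchy_corr; intro eps;
    destruct (exists_small (4 * C0 * E t) eps (cond_pos eps)) as [N HN]; exists N; intros n m Hn Hm.
    - assert (A1 := Htail' N n t Hn). assert (A2 := Htail' N m t Hm).
      pose proof (Rabs_pos (Y n t - Y N t)). pose proof (Rabs_pos (Y m t - Y N t)).
      replace (X n t - X m t) with ((X n t - X N t) - (X m t - X N t)) by ring.
      eapply Rle_lt_trans. apply Rabs_triang. rewrite Rabs_Ropp.
      assert (4 * C0 * E t / 2 ^ N = 2 * (2 * C0 * E t / 2 ^ N)) by (unfold Rdiv; ring). lra.
    - assert (A1 := Htail' N n t Hn). assert (A2 := Htail' N m t Hm).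
      pose proof (Rabs_pos (X n t - X N t)). pose proof (Rabs_pos (X m t - X N t)).
      replace (Y n t - Y m t) with ((Y n t - Y N t) - (Y m t - Y N t)) by ring.
      eapply Rle_lt_trans. apply Rabs_triang. rewrite Rabs_Ropp.
      assert (4 * C0 * E t / 2 ^ N = 2 * (2 * C0 * E t / 2 ^ N)) by (unfold Rdiv; ring). lra. }
  set (Xl := fun t => real (Lim_seq (fun n => X n t))).
  set (Yl := fun t => real (Lim_seq (fun n => Y n t))).
  assert (HlimX : forall t, is_lim_seq (fun n => X n t) (Xl t)).
  { intro t. destruct (proj1 (Hcauchy t)) as [l Hl]. unfold Xl. rewrite (is_lim_seq_unique _ _ Hl). exact Hl. }
  assert (HlimY : forall t, is_lim_seq (fun n => Y n t) (Yl t)).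
  { intro t. destruct (proj2 (Hcauchy t)) as [l Hl]. unfold Yl. rewrite (is_lim_seq_unique _ _ Hl). exact Hl. }
  assert (Happ : forall n t, Rabs (Xl t - X n t) + Rabs (Yl t - Y n t) <= 2 * C0 * E t / 2 ^ n).
  { intros n t. apply (lim_le_abs (fun m => X m t - X n t) (fun m => Y m t - Y n t) _ _ _ n).
    apply is_lim_seq_minus'. apply HlimX. apply is_lim_seq_const.
    apply is_lim_seq_minus'. apply HlimY. apply is_lim_seq_const.
    intros m Hm. apply Htail'; auto. }
  assert (HlipX : forall t s, Rabs (Xl t - Xl s) <= M * Rabs (t - s)).
  { intros t s. rewrite <- (Rplus_0_r (Rabs (Xl t - Xl s))). rewrite <- Rabs_R0.
    apply (lim_le_abs (fun m => X m t - X m s) (fun _ => 0) _ _ _ 1%nat).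
    apply is_lim_seq_minus'; apply HlimX. apply is_lim_seq_const.
    intros [|m] Hm. lia. rewrite Rabs_R0, Rplus_0_r.
    apply (lip_of_deriv _ (fun x => F1 x (X m x) (Y m x))). intro; apply Hder. intro; apply HB1. }
  assert (HlipY : forall t s, Rabs (Yl t - Yl s) <= M * Rabs (t - s)).
  { intros t s. rewrite <- (Rplus_0_r (Rabs (Yl t - Yl s))). rewrite <- Rabs_R0.
    apply (lim_le_abs (fun m => Y m t - Y m s) (fun _ => 0) _ _ _ 1%nat).
    apply is_lim_seq_minus'; apply HlimY. apply is_lim_seq_const.
    intros [|m] Hm. lia. rewrite Rabs_R0, Rplus_0_r.
    apply (lip_of_deriv _ (fun x => F2 x (X m x) (Y m x))). intro; apply Hder. intro; apply HB2. }
  assert (HcX : forall s, continuous Xl s) by (apply (lip_cont _ M); auto).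
  assert (HcY : forall s, continuous Yl s) by (apply (lip_cont _ M); auto).
  set (Z1 := fun t => p + RInt (fun s => F1 s (Xl s) (Yl s)) t0 t).
  set (Z2 := fun t => q + RInt (fun s => F2 s (Xl s) (Yl s)) t0 t).
  assert (HZ1 : forall t, is_derive Z1 t (F1 t (Xl t) (Yl t))) by (intro t; apply (prim_deriv' (fun s => F1 s (Xl s) (Yl s))); apply HC1; auto).
  assert (HZ2 : forall t, is_derive Z2 t (F2 t (Xl t) (Yl t))) by (intro t; apply (prim_deriv' (fun s => F2 s (Xl s) (Yl s))); apply HC2; auto).
  assert (HZ10 : Z1 t0 = p) by (unfold Z1; rewrite RInt_point; unfold zero; simpl; ring).
  assert (HZ20 : Z2 t0 = q) by (unfold Z2; rewrite RInt_point; unfold zero; simpl; ring).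
  assert (Heq : forall t, Z1 t = Xl t /\ Z2 t = Yl t).
  { intro t.
    assert (Hb : forall n, Rabs (Z1 t - X (S n) t) <= (2 * L * C0 / K) * E t / 2 ^ n /\
                           Rabs (Z2 t - Y (S n) t) <= (2 * L * C0 / K) * E t / 2 ^ n).
    { intro n. set (c := 2 * L * C0 / (K * 2 ^ n)).
      assert (Hc : 0 <= c).
      { unfold c. apply Rmult_le_pos. apply Rmult_le_pos; lra.
        left. apply Rinv_0_lt_compat. apply Rmult_lt_0_compat; auto. apply pow2_pos. }
      assert (Hck : c * K = 2 * L * C0 / 2 ^ n) by (unfold c; field; repeat split; first [apply Rgt_not_eq, pow2_pos | lra]).
      assert (Hce : c * E t = (2 * L * C0 / K) * E t / 2 ^ n) by (unfold c; field; repeat split; first [apply Rgt_not_eq, pow2_pos | lra]).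
      rewrite <- Hce. split.
      - apply (grow_bound (fun t => Z1 t - X (S n) t)
          (fun x => F1 x (Xl x) (Yl x) - F1 x (X n x) (Y n x)) t0 c K); auto.
        + rewrite HZ10, (proj1 (Hinit (S n))). ring.
        + intro x. apply is_derive_sub; [apply HZ1| apply Hder].
        + intro x. eapply Rle_trans. apply HL1. rewrite Hck.
          replace (2 * L * C0 / 2 ^ n * exp (K * Rabs (x - t0))) with (L * (2 * C0 * E x / 2 ^ n)) by (unfold E; field; apply Rgt_not_eq, pow2_pos).
          apply Rmult_le_compat_l; [lra|]. apply Happ.
      - apply (grow_bound (fun t => Z2 t - Y (S n) t)
          (fun x => F2 x (Xl x) (Yl x) - F2 x (X n x) (Y n x)) t0 c K); auto.
        + rewrite HZ20, (proj2 (Hinit (S n))). ring.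
        + intro x. apply is_derive_sub; [apply HZ2| apply Hder].
        + intro x. eapply Rle_trans. apply HL2. rewrite Hck.
          replace (2 * L * C0 / 2 ^ n * exp (K * Rabs (x - t0))) with (L * (2 * C0 * E x / 2 ^ n)) by (unfold E; field; apply Rgt_not_eq, pow2_pos).
          apply Rmult_le_compat_l; [lra|]. apply Happ. }
    set (B := (2 * L * C0 / K) * E t + 2 * C0 * E t / 2).
    assert (Hsplit : forall n, Rabs (Z1 t - Xl t) <= B / 2 ^ n /\ Rabs (Z2 t - Yl t) <= B / 2 ^ n).
    { intro n. destruct (Hb n) as [B1 B2]. assert (A := Happ (S n) t).
      pose proof (Rabs_pos (Xl t - X (S n) t)). pose proof (Rabs_pos (Yl t - Y (S n) t)).
      assert (Hx : 2 * C0 * E t / 2 ^ S n = (2 * C0 * E t / 2) / 2 ^ n) by (simpl pow; field; apply Rgt_not_eq, pow2_pos).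
      assert (HBn : B / 2 ^ n = (2 * L * C0 / K) * E t / 2 ^ n + (2 * C0 * E t / 2) / 2 ^ n) by (unfold B, Rdiv; ring).
      split.
      - replace (Z1 t - Xl t) with ((Z1 t - X (S n) t) - (Xl t - X (S n) t)) by ring.
        eapply Rle_trans. apply Rabs_triang. rewrite Rabs_Ropp. lra.
      - replace (Z2 t - Yl t) with ((Z2 t - Y (S n) t) - (Yl t - Y (S n) t)) by ring.
        eapply Rle_trans. apply Rabs_triang. rewrite Rabs_Ropp. lra. }
    split; apply Rminus_diag_uniq; apply (small_zero _ B); intro n; apply Hsplit. }
  exists Z1, Z2. split; auto. split; auto. intro t.
  rewrite (proj1 (Heq t)), (proj2 (Heq t)). auto.
Qed.

Definition rho (r : R -> R) t := sqrt (1 - / r t ^ 3).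

Section RF.
Variable r : R -> R.
Hypothesis Hr1 : forall t, 0 < t -> 1 < r t.
Hypothesis HB : forall t, 0 < t -> is_derive (B_of r) t (A_of r t / B_of r t).

Lemma inv3_bounds t : 0 < t -> 0 < / r t ^ 3 < 1.
Proof.
  intro Ht. pose proof (Hr1 t Ht).
  assert (1 < r t ^ 3) by (simpl; nra).
  split. apply Rinv_0_lt_compat; lra.
  rewrite <- Rinv_1. apply Rinv_lt_contravar; lra.
Qed.

Lemma rho_sq t : 0 < t -> rho r t ^ 2 = 1 - / r t ^ 3.
Proof.
  intro Ht. pose proof (inv3_bounds t Ht). unfold rho. rewrite <- Rsqr_pow2.
  apply Rsqr_sqrt. lra.
Qed.

Lemma rho_bounds t : 0 < t -> 0 < rho r t < 1.
Proof.
  intro Ht. pose proof (inv3_bounds t Ht). unfold rho. split.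
  apply sqrt_lt_R0. lra.
  assert (sqrt (1 - / r t ^ 3) < sqrt 1) by (apply sqrt_lt_1_alt; lra). rewrite sqrt_1 in H0. exact H0.
Qed.

Lemma A_eq t : A_of r t = r t * rho r t / 3.
Proof. unfold A_of, rho. field. Qed.

Lemma sqrt3_sq : sqrt 3 * sqrt 3 = 3.
Proof. apply sqrt_sqrt. lra. Qed.

Lemma sqrt3_pos : 0 < sqrt 3.
Proof. apply sqrt_lt_R0. lra. Qed.

Lemma B_sq t : B_of r t ^ 2 = r t ^ 2 / 3.
Proof. unfold B_of. pose proof sqrt3_pos. replace ((r t / sqrt 3) ^ 2) with (r t ^ 2 / (sqrt 3 * sqrt 3)) by (field; lra). rewrite sqrt3_sq. reflexivity. Qed.

Lemma r_der t : 0 < t -> is_derive r t (rho r t).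
Proof.
  intro Ht. pose proof (HB t Ht). pose proof sqrt3_sq. pose proof sqrt3_pos. pose proof (Hr1 t Ht).
  assert (HD : is_derive (fun s => sqrt 3 * B_of r s) t (sqrt 3 * (A_of r t / B_of r t))).
  { apply (is_derive_scal (B_of r) t (sqrt 3) _ H). }
  assert (E : sqrt 3 * (A_of r t / B_of r t) = rho r t).
  { rewrite A_eq. unfold B_of. replace (sqrt 3 * (r t * rho r t / 3 / (r t / sqrt 3))) with ((sqrt 3 * sqrt 3) * rho r t / 3) by (field; lra). rewrite H0. field. }
  rewrite E in HD. eapply is_derive_ext; [|exact HD].
  intro s. simpl. unfold B_of. field. lra.
Qed.

Lemma r_mono a b : 0 < a -> a <= b -> r a <= r b.
Proof.
  intros Ha Hab. apply (mono_incr r (rho r)); auto.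
  intros x Hx. apply r_der. lra.
  intros x Hx. left. apply rho_bounds. lra.
Qed.

Lemma rho_mono a b : 0 < a -> a <= b -> rho r a <= rho r b.
Proof.
  intros Ha Hab. unfold rho. apply sqrt_le_1_alt.
  assert (r a ^ 3 <= r b ^ 3).
  { apply pow_incr. pose proof (Hr1 a Ha). split; [lra|]. apply r_mono; auto. }
  assert (0 < r a ^ 3) by (pose proof (Hr1 a Ha); apply pow_lt; lra).
  assert (/ r b ^ 3 <= / r a ^ 3) by (apply Rinv_le_contravar; lra).
  lra.
Qed.

Lemma rhs1 t fpv fmv : 0 < t ->
  fpv / A_of r t * (1 - A_of r t ^ 2 / B_of r t ^ 2 - fpv) + fmv ^ 2 * (A_of r t / B_of r t ^ 2)
  = (fpv * (1 - rho r t ^ 2 - 3 * (fpv - 2/3)) + fmv ^ 2 * rho r t ^ 2) / (r t * rho r t).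
Proof.
  intro Ht. pose proof (Hr1 t Ht). pose proof (rho_bounds t Ht).
  rewrite B_sq, A_eq. field. lra.
Qed.

Lemma rhs2 t fpv fmv : 0 < t ->
  2 * fmv / A_of r t * (fpv - 1) = 6 * fmv * (fpv - 1) / (r t * rho r t).
Proof.
  intro Ht. pose proof (Hr1 t Ht). pose proof (rho_bounds t Ht).
  rewrite A_eq. field. lra.
Qed.

End RF.

Definition Fp (r fp fm : R -> R) t :=
  (fp t * (1 - rho r t ^ 2 - 3 * (fp t - 2/3)) + fm t ^ 2 * rho r t ^ 2) / (r t * rho r t).
Definition Fm (r fp fm : R -> R) t := 6 * fm t * (fp t - 1) / (r t * rho r t).

Lemma div_up N a D0 D : 0 < D0 <= D -> 0 <= a -> N <= a -> N / D <= a / D0.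
Proof.
  intros [H0 H1] Ha HN. apply Rle_trans with (a / D).
  apply Rmult_le_compat_r; [left; apply Rinv_0_lt_compat; lra| auto].
  apply Rmult_le_compat_l; auto. apply Rinv_le_contravar; lra.
Qed.

Lemma div_low N a D0 D : 0 < D0 <= D -> 0 <= a -> - a <= N -> - a / D0 <= N / D.
Proof.
  intros HD Ha HN. assert (- N / D <= a / D0) by (apply div_up; auto; lra).
  unfold Rdiv in *. lra.
Qed.

Lemma cont_shift (f : R -> R) c t : continuous f t -> continuous (fun s => f s - c) t.
Proof. intro H. apply (continuous_minus f (fun _ => c)); auto. apply continuous_const. Qed.

Lemma cont_shift' (f : R -> R) c t : continuous f t -> continuous (fun s => c - f s) t.
Proof. intro H. apply (continuous_minus (fun _ => c) f); auto. apply continuous_const. Qed.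

Section Inv.
Variable r : R -> R.
Hypothesis Hr1 : forall t, 0 < t -> 1 < r t.
Hypothesis HB : forall t, 0 < t -> is_derive (B_of r) t (A_of r t / B_of r t).

Lemma invariance (fp fm : R -> R) t0 p q :
  0 < t0 -> 2/3 < p < 1 -> 0 < q < 1 -> fp t0 = p -> fm t0 = q ->
  (forall t, t0 <= t -> continuous fp t /\ continuous fm t) ->
  (forall t, t0 <= t -> 0 < fm t -> fm t < 1 -> 2/3 < fp t -> fp t < 1 ->
     is_derive fp t (Fp r fp fm t) /\ is_derive fm t (Fm r fp fm t)) ->
  exists P, P < 1 /\ forall t, t0 <= t -> 0 < fm t /\ fm t <= q /\ 2/3 < fp t /\ fp t < P.
Proof.
  intros Ht0 Hp Hq Hfp0 Hfm0 Hcont Hder.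
  set (r0 := r t0). set (p0 := rho r t0).
  assert (Hr0 : 1 < r0) by (apply Hr1; auto).
  assert (Hp0 : 0 < p0 < 1) by (apply rho_bounds; auto).
  assert (Hrs : forall s, t0 <= s -> r0 <= r s /\ p0 <= rho r s /\ rho r s < 1 /\ 1 < r s).
  { intros s Hs. split. apply r_mono; auto. split. apply rho_mono; auto.
    split. apply rho_bounds; auto. lra. apply Hr1. lra. }
  set (D0 := r0 * p0).
  assert (HD0 : 0 < D0) by (unfold D0; nra).
  assert (HD : forall s, t0 <= s -> 0 < D0 <= r s * rho r s).
  { intros s Hs. destruct (Hrs s Hs) as [A1 [A2 [A3 A4]]]. split; auto. unfold D0.
    apply Rmult_le_compat; lra. }
  set (eps := p0 ^ 2 * (1 - q ^ 2) / 6).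
  set (P := Rmax ((p + 1) / 2) (1 - eps)).
  assert (Heps : 0 < eps < 1/6).
  { unfold eps. assert (0 < p0 ^ 2 < 1) by (simpl; nra). assert (0 < 1 - q ^ 2 < 1) by (simpl; nra). split; nra. }
  assert (HP1 : p < P) by (unfold P; pose proof (Rmax_l ((p + 1) / 2) (1 - eps)); lra).
  assert (HP2 : P < 1) by (unfold P; apply Rmax_lub_lt; lra).
  assert (HP3 : 1 - eps <= P) by (unfold P; apply Rmax_r).
  assert (HP4 : 3 * P * (1 - P) <= p0 ^ 2 * (P - q ^ 2)).
  { assert (3 * P * (1 - P) <= 3 * eps) by nra.
    assert (p0 ^ 2 * (P - q ^ 2) >= p0 ^ 2 * (1 - eps - q ^ 2)) by (assert (0 <= p0^2) by nra; nra).
    assert (p0 ^ 2 * (1 - eps - q ^ 2) = 6 * eps - p0 ^ 2 * eps) by (unfold eps; field).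
    assert (p0 ^ 2 <= 1) by (simpl; nra). nra. }
  assert (HPq : q ^ 2 <= P) by (simpl; nra).
  set (Q := fun t => 0 < fm t /\ fm t < 1 /\ 2/3 < fp t /\ fp t < P).
  assert (Hdecr : forall t, t0 <= t -> (forall s, t0 <= s <= t -> Q s) -> fm t <= q).
  { intros t Ht HQ. rewrite <- Hfm0. apply (mono_decr fm (Fm r fp fm)); auto.
    intros x Hx. destruct (HQ x Hx) as [A1 [A0 [A2 A3]]]. apply Hder; lra.
    intros x Hx. destruct (HQ x Hx) as [A1 [A0 [A2 A3]]]. unfold Fm.
    assert (0 < r x * rho r x) by (destruct (HD x ltac:(lra)); lra).
    unfold Rdiv. apply Rmult_le_0_r; [|left; apply Rinv_0_lt_compat; auto]. nra. }
  assert (HQall : forall t, t0 <= t -> Q t).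
  { apply real_ind.
    - intros t Ht IH.
      assert (Hd : forall s, t0 <= s < t -> is_derive fp s (Fp r fp fm s) /\ is_derive fm s (Fm r fp fm s)).
      { intros s Hs. destruct (IH s Hs) as [A1 [A0 [A2 A3]]]. apply Hder; lra. }
      assert (Hq' : forall s, t0 <= s < t -> fm s <= q).
      { intros s Hs. apply Hdecr. lra. intros x Hx. apply IH. lra. }
      destruct (Hcont t Ht) as [Cp Cm].
      split; [|split; [|split]].
      + apply (persist fm (Fm r fp fm) (2 / D0) t0 t); auto.
        * unfold Rdiv; apply Rmult_le_pos; [lra| left; apply Rinv_0_lt_compat; auto].
        * lra.
        * intros s Hs. split. apply Hd; auto.
          destruct (IH s Hs) as [A1 [A0 [A2 A3]]]. unfold Fm.
          replace (- (2 / D0) * fm s) with (- (2 * fm s) / D0) by (field; lra).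
          apply div_low. apply HD; lra. lra. nra.
      + assert (0 < 1 - fm t); [|lra].
        apply (persist (fun s => 1 - fm s) (fun s => - Fm r fp fm s) 0 t0 t); auto.
        * lra.
        * lra.
        * apply cont_shift'; auto.
        * intros s Hs. destruct (IH s Hs) as [A1 [A0 [A2 A3]]]. split.
          replace (- Fm r fp fm s) with (0 - Fm r fp fm s) by ring.
          apply is_derive_sub. apply is_derive_c. apply Hd; auto.
          unfold Fm. assert (0 < r s * rho r s) by (destruct (HD s ltac:(lra)); lra).
          assert (6 * fm s * (fp s - 1) / (r s * rho r s) <= 0).
          { unfold Rdiv. apply Rmult_le_0_r; [|left; apply Rinv_0_lt_compat; auto]. nra. }
          lra.
      + assert (0 < fp t - 2/3); [|lra].
        apply (persist (fun s => fp s - 2/3) (Fp r fp fm) (3 / D0) t0 t); auto.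
        * unfold Rdiv; apply Rmult_le_pos; [lra| left; apply Rinv_0_lt_compat; auto].
        * lra.
        * apply cont_shift; auto.
        * intros s Hs. destruct (IH s Hs) as [A1 [A0 [A2 A3]]]. split.
          replace (Fp r fp fm s) with (Fp r fp fm s - 0) by ring.
          apply is_derive_sub. apply Hd; auto. apply is_derive_c.
          unfold Fp.
          replace (- (3 / D0) * (fp s - 2/3)) with (- (3 * (fp s - 2/3)) / D0) by (field; lra).
          apply div_low. apply HD; lra. lra.
          destruct (Hrs s ltac:(lra)) as [B1 [B2 [B3 B4]]].
          assert (0 <= 1 - rho r s ^ 2) by (simpl; nra).
          assert (0 <= fm s ^ 2 * rho r s ^ 2) by (apply Rmult_le_pos; apply pow2_ge_0).
          nra.
      + assert (0 < P - fp t); [|lra].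
        apply (persist (fun s => P - fp s) (fun s => - Fp r fp fm s) (4 / D0) t0 t); auto.
        * unfold Rdiv; apply Rmult_le_pos; [lra| left; apply Rinv_0_lt_compat; auto].
        * lra.
        * apply cont_shift'; auto.
        * intros s Hs. destruct (IH s Hs) as [A1 [A0 [A2 A3]]]. split.
          replace (- Fp r fp fm s) with (0 - Fp r fp fm s) by ring.
          apply is_derive_sub. apply is_derive_c. apply Hd; auto.
          assert (Fp r fp fm s <= 4 * (P - fp s) / D0); [|unfold Rdiv in *; lra].
          unfold Fp. apply div_up. apply HD; lra. lra.
          destruct (Hrs s ltac:(lra)) as [B1 [B2 [B3 B4]]].
          set (rh := rho r s) in *. set (x := fp s) in *. set (y := fm s) in *.
          assert (HI : x * (1 - rh ^ 2 - 3 * (x - 2/3)) + y ^ 2 * rh ^ 2 =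
                  (3 * P * (1 - P) - rh ^ 2 * P + y ^ 2 * rh ^ 2) + (x - P) * (3 * (1 - x - P) - rh ^ 2)) by (clearbody P rh x y; field).
          rewrite HI.
          assert (y ^ 2 <= q ^ 2) by (apply pow_incr; split; [lra| apply Hq'; auto]).
          assert (p0 ^ 2 <= rh ^ 2) by (apply pow_incr; lra).
          assert (3 * P * (1 - P) - rh ^ 2 * P + y ^ 2 * rh ^ 2 <= 0).
          { assert (rh ^ 2 * (P - y ^ 2) >= p0 ^ 2 * (P - q ^ 2)) by (assert (0 <= p0 ^ 2) by (simpl; nra); nra). nra. }
          assert ((x - P) * (3 * (1 - x - P) - rh ^ 2) <= 4 * (P - x)).
          { assert (0 <= rh ^ 2 <= 1) by (simpl; nra). nra. }
          lra.
    - intros t Ht [A1 [A0 [A2 A3]]].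
      destruct (Hcont t Ht) as [Cp Cm].
      destruct (cont_pos (fun s => 1 - fm s) t (cont_shift' _ _ _ Cm) ltac:(lra)) as [d0 [Hd0 H0']].
      destruct (cont_pos fm t Cm A1) as [d1 [Hd1 H1]].
      destruct (cont_pos (fun s => fp s - 2/3) t (cont_shift _ _ _ Cp) ltac:(lra)) as [d2 [Hd2 H2]].
      destruct (cont_pos (fun s => P - fp s) t (cont_shift' _ _ _ Cp) ltac:(lra)) as [d3 [Hd3 H3]].
      exists (Rmin d0 (Rmin d1 (Rmin d2 d3))). split.
      apply Rmin_glb_lt; auto. apply Rmin_glb_lt; auto. apply Rmin_glb_lt; auto.
      intros s Hs.
      assert (Rmin d0 (Rmin d1 (Rmin d2 d3)) <= d0) by apply Rmin_l.
      assert (Rmin d0 (Rmin d1 (Rmin d2 d3)) <= Rmin d1 (Rmin d2 d3)) by apply Rmin_r.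
      assert (Rmin d1 (Rmin d2 d3) <= d1) by apply Rmin_l.
      assert (Rmin d1 (Rmin d2 d3) <= Rmin d2 d3) by apply Rmin_r.
      assert (Rmin d2 d3 <= d2) by apply Rmin_l.
      assert (Rmin d2 d3 <= d3) by apply Rmin_r.
      assert (Habs : forall d, Rmin d0 (Rmin d1 (Rmin d2 d3)) <= d -> Rabs (s - t) < d).
      { intros d Hdd. rewrite Rabs_right by lra. lra. }
      split; [|split; [|split]].
      + apply H1, Habs; lra.
      + assert (0 < 1 - fm s) by (apply H0', Habs; lra). lra.
      + assert (0 < fp s - 2/3) by (apply H2, Habs; lra). lra.
      + assert (0 < P - fp s) by (apply H3, Habs; lra). lra. }
  exists P. split; auto. intros t Ht. destruct (HQall t Ht) as [A1 [A0 [A2 A3]]].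
  split; auto. split; auto. apply Hdecr; auto. intros s Hs; apply HQall; lra.
Qed.

End Inv.

Definition pw x a := exp (a * ln x).

Lemma pw_add x a b : pw x (a + b) = pw x a * pw x b.
Proof. unfold pw. rewrite <- exp_plus. f_equal. ring. Qed.
Lemma pw_one x : 0 < x -> pw x 1 = x.
Proof. intro. unfold pw. rewrite Rmult_1_l. apply exp_ln; auto. Qed.
Lemma pw_pos x a : 0 < pw x a.
Proof. apply exp_pos. Qed.
Lemma pw_mono x a b : 1 <= x -> a <= b -> pw x a <= pw x b.
Proof.
  intros Hx Hab. unfold pw. assert (0 <= ln x).
  { destruct (Req_dec x 1) as [->|]. rewrite ln_1; lra. rewrite <- ln_1. left; apply ln_increasing; lra. }
  assert (a * ln x <= b * ln x) by nra.
  destruct (Rle_lt_or_eq_dec _ _ H0) as [H1|H1]. left; apply exp_increasing; auto. rewrite H1; lra.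
Qed.
Lemma pw_neg x a : pw x (- a) = / pw x a.
Proof. unfold pw. rewrite <- exp_Ropp. f_equal. ring. Qed.

Lemma pw_two x : 0 < x -> pw x 2 = x ^ 2.
Proof. intro. replace 2 with (1 + 1) by ring. rewrite pw_add, pw_one; auto. ring. Qed.

Lemma pw_sq x a : pw x a ^ 2 = pw x (2 * a).
Proof. replace (2 * a) with (a + a) by ring. rewrite pw_add. ring. Qed.

Lemma pw_2m x a : 0 < x -> pw x (2 - a) = x ^ 2 * pw x (- a).
Proof. intro. replace (2 - a) with (2 + - a) by ring. rewrite pw_add, pw_two; auto. Qed.

Lemma pw_1m x a : 0 < x -> pw x (1 - a) = x * pw x (- a).
Proof. intro. replace (1 - a) with (1 + - a) by ring. rewrite pw_add, pw_one; auto. Qed.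

Lemma lim_rate (g phi : R -> R) T : (forall t, T <= t -> 0 <= phi t) ->
  (forall t s, T <= t <= s -> g s + phi s <= g t + phi t) ->
  (forall t s, T <= t <= s -> g t - phi t <= g s - phi s) ->
  exists L, forall t, T <= t -> Rabs (g t - L) <= phi t.
Proof.
  intros Hphi Hdec Hinc.
  set (E := fun x => exists t, T <= t /\ x = g t - phi t).
  assert (HE : exists x, E x) by (exists (g T - phi T); exists T; split; auto; lra).
  assert (HB : bound E).
  { exists (g T + phi T). intros x [t [Ht ->]]. specialize (Hdec T t ltac:(lra)). specialize (Hphi t Ht). lra. }
  destruct (completeness E HB HE) as [L [Hub Hlub]].
  exists L. intros t Ht. apply Rabs_le. split.
  - assert (L <= g t + phi t); [|lra].
    apply Hlub. intros x [s [Hs ->]]. destruct (Rle_dec t s).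
    + specialize (Hdec t s ltac:(lra)). specialize (Hphi s Hs). lra.
    + specialize (Hinc s t ltac:(lra)). specialize (Hphi t Ht). lra.
  - assert (g t - phi t <= L) by (apply Hub; exists t; split; auto). lra.
Qed.

Lemma lim_inf (f : R -> R) l K T : 0 < T -> 0 <= K ->
  (forall x, T <= x -> Rabs (f x - l) <= K / x) -> filterlim f (Rbar_locally p_infty) (locally l).
Proof.
  intros HT HK Hb. apply (proj2 (filterlim_locally f l)). intro eps.
  exists (Rmax T (K / eps)). intros x Hx.
  assert (T <= x) by (pose proof (Rmax_l T (K / eps)); lra).
  assert (K / eps < x) by (pose proof (Rmax_r T (K / eps)); lra).
  specialize (Hb x H). unfold ball; simpl; unfold AbsRing_ball, abs, minus, plus, opp; simpl.
  pose proof (cond_pos eps).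
  assert (K / x < eps).
  { apply (Rmult_lt_reg_r x); [lra|]. unfold Rdiv. rewrite Rmult_assoc, Rinv_l by lra.
    apply (Rmult_lt_reg_r (/ eps)). apply Rinv_0_lt_compat; lra.
    replace (eps * x * / eps) with x by (field; lra). rewrite Rmult_1_r. exact H0. }
  unfold Rminus in Hb. lra.
Qed.

Lemma conv g mu c D t a : 0 < t -> t <= 2 * a -> Rabs (a - t) <= D -> 0 <= c ->
  Rabs (a ^ 2 * g - mu) <= c / a -> Rabs (g - mu / t ^ 2) <= (8 * c + 6 * Rabs mu * D) / t ^ 3.
Proof.
  intros Ht Hta HD Hc Hg.
  assert (Ha : 0 < a) by lra.
  assert (E1 : g - mu / t ^ 2 = (a ^ 2 * g - mu) / a ^ 2 + mu * ((t - a) * (t + a)) / (a ^ 2 * t ^ 2)) by (field; lra).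
  rewrite E1. eapply Rle_trans. apply Rabs_triang.
  assert (B1 : Rabs ((a ^ 2 * g - mu) / a ^ 2) <= 8 * c / t ^ 3).
  { unfold Rdiv. rewrite Rabs_mult, (Rabs_right (/ a ^ 2)) by (left; apply Rinv_0_lt_compat, pow_lt; lra).
    assert (c / a * / a ^ 2 <= 8 * c * / t ^ 3).
    { replace (c / a * / a ^ 2) with (c * / a ^ 3) by (field; lra).
      replace (8 * c * / t ^ 3) with (c * / (t ^ 3 / 8)) by (field; lra).
      apply Rmult_le_compat_l; auto. apply Rinv_le_contravar. apply Rdiv_lt_0_compat; [apply pow_lt; lra| lra].
      assert (t ^ 3 <= (2 * a) ^ 3) by (apply pow_incr; lra). simpl in *. lra. }
    unfold Rdiv in Hg. assert (0 < / a ^ 2) by (apply Rinv_0_lt_compat, pow_lt; lra). nra. }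
  assert (B2 : Rabs (mu * ((t - a) * (t + a)) / (a ^ 2 * t ^ 2)) <= 6 * Rabs mu * D / t ^ 3).
  { unfold Rdiv. rewrite !Rabs_mult. rewrite (Rabs_right (/ (a ^ 2 * t ^ 2))) by (left; apply Rinv_0_lt_compat; apply Rmult_lt_0_compat; apply pow_lt; lra).
    rewrite (Rabs_right (t + a)) by lra. replace (Rabs (t - a)) with (Rabs (a - t)) by (rewrite <- Rabs_Ropp; f_equal; ring).
    assert (Rabs mu * (Rabs (a - t) * (t + a)) <= Rabs mu * (D * (3 * a))).
    { apply Rmult_le_compat_l. apply Rabs_pos. apply Rmult_le_compat; try lra. apply Rabs_pos. }
    assert (Rabs mu * (D * (3 * a)) * / (a ^ 2 * t ^ 2) <= 6 * Rabs mu * D * / t ^ 3).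
    { assert (0 <= D) by (pose proof (Rabs_pos (a - t)); lra).
      replace (Rabs mu * (D * (3 * a)) * / (a ^ 2 * t ^ 2)) with (3 * Rabs mu * D * / t ^ 2 * / a) by (field; lra).
      replace (6 * Rabs mu * D * / t ^ 3) with (3 * Rabs mu * D * / t ^ 2 * (2 / t)) by (field; lra).
      apply Rmult_le_compat_l. apply Rmult_le_pos. pose proof (Rabs_pos mu). nra. left; apply Rinv_0_lt_compat, pow_lt; lra.
      apply (Rmult_le_reg_r (a * t)). nra. replace (/ a * (a * t)) with t by (field; lra).
      replace (2 / t * (a * t)) with (2 * a) by (field; lra). lra. }
    assert (0 < / (a ^ 2 * t ^ 2)) by (apply Rinv_0_lt_compat; apply Rmult_lt_0_compat; apply pow_lt; lra).
    assert (Rabs mu * (Rabs (a - t) * (t + a)) * / (a ^ 2 * t ^ 2) <= Rabs mu * (D * (3 * a)) * / (a ^ 2 * t ^ 2)) by (apply Rmult_le_compat_r; lra).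
    lra. }
  unfold Rdiv in *. lra.
Qed.

Section Asym.
Variables r fp fm : R -> R.
Variables t0 q P : R.
Hypothesis Hr1 : forall t, 0 < t -> 1 < r t.
Hypothesis HB : forall t, 0 < t -> is_derive (B_of r) t (A_of r t / B_of r t).
Hypothesis Ht0 : 0 < t0.
Hypothesis HP : P < 1.
Hypothesis Hq : 0 < q.
Hypothesis Hinv : forall t, t0 <= t -> 0 < fm t /\ fm t <= q /\ 2/3 < fp t /\ fp t < P.
Hypothesis Hder : forall t, t0 <= t -> is_derive fp t (Fp r fp fm t) /\ is_derive fm t (Fm r fp fm t).

Let r0 := r t0.
Let p0 := rho r t0.

Lemma basic t : t0 <= t -> 1 < r t /\ r0 <= r t /\ 0 < p0 <= rho r t /\ rho r t < 1 /\
  1 - rho r t ^ 2 = / r t ^ 3.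
Proof.
  intro Ht. split. apply Hr1; lra. split. apply r_mono; auto.
  split. split. apply rho_bounds; auto. apply rho_mono; auto.
  split. apply rho_bounds; auto; lra. rewrite rho_sq; auto. ring. lra.
Qed.

Lemma dr t : t0 <= t -> is_derive r t (rho r t).
Proof. intro. apply r_der; auto. lra. Qed.

Definition u t := fp t - 2/3.
Definition Gf t := r t ^ 2 * u t.
Definition Hf t := r t ^ 2 * fm t.

Lemma dG t : t0 <= t -> is_derive Gf t
  (r t * ((2/3 - u t) * (1 - rho r t ^ 2) - 3 * u t ^ 2 + fm t ^ 2 * rho r t ^ 2) / rho r t).
Proof.
  intro Ht. destruct (Hder t Ht) as [D1 D2]. pose proof (dr t Ht) as D3.
  destruct (basic t Ht) as [B1 [B2 [B3 [B4 B5]]]].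
  unfold Gf, u. auto_derive. split; [eexists; eauto| split; [eexists; eauto| auto]].
  drw D1. drw D3. unfold Fp. field. lra.
Qed.

Lemma dH t : t0 <= t -> is_derive Hf t
  (r t * fm t * (6 * u t - 2 * (1 - rho r t ^ 2)) / rho r t).
Proof.
  intro Ht. destruct (Hder t Ht) as [D1 D2]. pose proof (dr t Ht) as D3.
  destruct (basic t Ht) as [B1 [B2 [B3 [B4 B5]]]].
  unfold Hf, u. auto_derive. split; [eexists; eauto| split; [eexists; eauto| auto]].
  drw D2. drw D3. unfold Fm. field. lra.
Qed.

Let P1 := Rmax P (11/12).
Let beta := 6 * (1 - P1).

Lemma beta_bounds : 0 < beta < 1 /\ forall t, t0 <= t -> fp t < P1.
Proof.
  unfold beta, P1. split.
  assert (P <= Rmax P (11/12)) by apply Rmax_l. assert (11/12 <= Rmax P (11/12)) by apply Rmax_r.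
  assert (Rmax P (11/12) < 1) by (apply Rmax_lub_lt; lra). lra.
  intros t Ht. destruct (Hinv t Ht) as [_ [_ [_ H]]]. assert (P <= Rmax P (11/12)) by apply Rmax_l. lra.
Qed.

Lemma step1 : exists K1, 0 < K1 /\ forall t, t0 <= t -> fm t <= K1 * pw (r t) (- beta).
Proof.
  destruct beta_bounds as [Hb HP1].
  exists (q * pw r0 beta). split. apply Rmult_lt_0_compat; auto. apply pw_pos.
  intros t Ht.
  assert (H : fm t * pw (r t) beta <= fm t0 * pw (r t0) beta).
  { apply (mono_decr (fun x => fm x * pw (r x) beta)
      (fun x => fm x * pw (r x) beta * (6 * (fp x - 1) + beta * rho r x ^ 2) / (r x * rho r x))); auto.
    - intros x Hx. destruct (Hder x ltac:(lra)) as [D1 D2]. pose proof (dr x ltac:(lra)) as D3.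
      destruct (basic x ltac:(lra)) as [B1 [B2 [B3 [B4 B5]]]].
      unfold pw. auto_derive. repeat split; try (eexists; eauto); lra.
      drw D2. drw D3. unfold Fm. field. lra.
    - intros x Hx. destruct (basic x ltac:(lra)) as [B1 [B2 [B3 [B4 B5]]]].
      destruct (Hinv x ltac:(lra)) as [I1 [I2 [I3 I4]]]. pose proof (HP1 x ltac:(lra)).
      assert (6 * (fp x - 1) + beta * rho r x ^ 2 <= 0).
      { unfold beta in *. assert (rho r x ^ 2 <= 1) by (simpl; nra). nra. }
      assert (0 < fm x * pw (r x) beta) by (apply Rmult_lt_0_compat; auto; apply pw_pos).
      assert (0 < r x * rho r x) by nra.
      unfold Rdiv. apply Rmult_le_0_r; [| left; apply Rinv_0_lt_compat; auto]. nra. }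
  destruct (Hinv t0 ltac:(lra)) as [_ [Hq0 _]].
  rewrite pw_neg. fold r0 in H.
  assert (Hpp : 0 < pw (r t) beta) by apply pw_pos.
  apply (Rmult_le_reg_r (pw (r t) beta)); auto.
  rewrite Rmult_assoc, Rinv_l by lra. rewrite Rmult_1_r.
  assert (fm t0 * pw r0 beta <= q * pw r0 beta) by (apply Rmult_le_compat_r; [left; apply pw_pos| auto]).
  lra.
Qed.

Lemma step2 : exists C2, 0 <= C2 /\ forall t, t0 <= t -> u t <= C2 * pw (r t) (- (2 * beta)).
Proof.
  destruct beta_bounds as [Hb HP1]. destruct step1 as [K1 [HK1 Hfm]].
  destruct (basic t0 ltac:(lra)) as [_ [_ [[Hp0 _] _]]]. fold p0 in Hp0.
  set (c1 := K1 ^ 2 / ((2 - 2 * beta) * p0 ^ 2)).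
  set (c2 := 2 / (3 * p0 ^ 2)).
  assert (Hc1 : 0 <= c1) by (unfold c1; apply Rmult_le_pos; [apply pow2_ge_0| left; apply Rinv_0_lt_compat; apply Rmult_lt_0_compat; [lra| apply pow_lt; lra]]).
  assert (Hc2 : 0 <= c2) by (unfold c2; apply Rmult_le_pos; [lra| left; apply Rinv_0_lt_compat; apply Rmult_lt_0_compat; [lra| apply pow_lt; lra]]).
  set (Psi := fun x => Gf x - c1 * pw (r x) (2 - 2 * beta) + c2 / r x).
  assert (Hdec : forall t, t0 <= t -> Psi t <= Psi t0).
  { intros t Ht. apply (mono_decr Psi (fun x =>
       r x * ((2/3 - u x) * (1 - rho r x ^ 2) - 3 * u x ^ 2 + fm x ^ 2 * rho r x ^ 2) / rho r x
       - c1 * (pw (r x) (2 - 2 * beta) * ((2 - 2 * beta) * (rho r x / r x)))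
       - c2 * rho r x / r x ^ 2)); auto.
    - intros x Hx. pose proof (dG x ltac:(lra)) as D1. pose proof (dr x ltac:(lra)) as D3.
      destruct (basic x ltac:(lra)) as [B1 [B2 [B3 [B4 B5]]]].
      unfold Psi, pw. auto_derive. repeat split; try (eexists; eauto); lra.
      drw D1. drw D3. field. lra.
    - intros x Hx. destruct (basic x ltac:(lra)) as [B1 [B2 [B3 [B4 B5]]]].
      destruct (Hinv x ltac:(lra)) as [I1 [I2 [I3 I4]]]. pose proof (Hfm x ltac:(lra)) as F1.
      set (R0 := r x) in *. set (rh := rho r x) in *. set (W := pw R0 (- (2 * beta))).
      assert (HW : 0 < W) by apply pw_pos.
      assert (Hf2 : fm x ^ 2 <= K1 ^ 2 * W).
      { replace (K1 ^ 2 * W) with ((K1 * pw R0 (- beta)) ^ 2)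
          by (unfold W; rewrite Rpow_mult_distr, pw_sq; do 2 f_equal; ring).
        apply pow_incr. split; lra. }
      assert (Hu : 0 < u x) by (unfold u; lra).
      assert (Hrh2 : 0 < rh ^ 2 < 1) by (simpl; nra).
      assert (HiR : R0 * (1 - rh ^ 2) = / R0 ^ 2) by (rewrite B5; field; lra).
      assert (A : R0 * ((2/3 - u x) * (1 - rh ^ 2) - 3 * u x ^ 2 + fm x ^ 2 * rh ^ 2) / rh
                  <= (2/3 * / R0 ^ 2 + R0 * (K1 ^ 2 * W)) / p0).
      { apply div_up. lra.
        apply Rplus_le_le_0_compat. apply Rmult_le_pos. lra. left; apply Rinv_0_lt_compat, pow_lt; lra.
        apply Rmult_le_pos; [lra| apply Rmult_le_pos; [apply pow2_ge_0| lra]].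
        fold R0. rewrite <- HiR.
        assert (fm x ^ 2 * rh ^ 2 <= K1 ^ 2 * W) by (assert (0 <= fm x ^ 2) by apply pow2_ge_0; nra).
        assert (0 <= u x ^ 2) by apply pow2_ge_0.
        assert (R0 * (u x * (1 - rh ^ 2)) >= 0) by (apply Rle_ge, Rmult_le_pos; [lra| apply Rmult_le_pos; lra]).
        assert (R0 * (u x ^ 2) >= 0) by (apply Rle_ge, Rmult_le_pos; lra).
        assert (R0 * (fm x ^ 2 * rh ^ 2) <= R0 * (K1 ^ 2 * W)) by (apply Rmult_le_compat_l; lra).
        replace (R0 * ((2 / 3 - u x) * (1 - rh ^ 2) - 3 * u x ^ 2 + fm x ^ 2 * rh ^ 2)) with
          (2/3 * (R0 * (1 - rh ^ 2)) - R0 * (u x * (1 - rh ^ 2)) - 3 * (R0 * u x ^ 2) + R0 * (fm x ^ 2 * rh ^ 2)) by ring.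
        lra. }
      assert (Bc1 : c1 * (pw R0 (2 - 2 * beta) * ((2 - 2 * beta) * (rh / R0))) >= R0 * (K1 ^ 2 * W) / p0).
      { rewrite pw_2m by lra. fold W. unfold c1.
        replace (K1 ^ 2 / ((2 - 2 * beta) * p0 ^ 2) * (R0 ^ 2 * W * ((2 - 2 * beta) * (rh / R0))))
          with (R0 * (K1 ^ 2 * W) / p0 * (rh / p0)) by (field; repeat split; lra).
        assert (1 <= rh / p0) by (apply (Rmult_le_reg_r p0); [lra|]; unfold Rdiv; rewrite Rmult_assoc, Rinv_l; lra).
        assert (0 <= R0 * (K1 ^ 2 * W) / p0) by (apply Rmult_le_pos; [apply Rmult_le_pos; [lra| apply Rmult_le_pos; [apply pow2_ge_0| lra]]| left; apply Rinv_0_lt_compat; lra]).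
        nra. }
      assert (Bc2 : c2 * rh / R0 ^ 2 >= 2/3 * / R0 ^ 2 / p0).
      { unfold c2. replace (2 / (3 * p0 ^ 2) * rh / R0 ^ 2) with (2/3 * / R0 ^ 2 / p0 * (rh / p0)) by (field; lra).
        assert (1 <= rh / p0) by (apply (Rmult_le_reg_r p0); [lra|]; unfold Rdiv; rewrite Rmult_assoc, Rinv_l; lra).
        assert (0 <= 2/3 * / R0 ^ 2 / p0) by (apply Rmult_le_pos; [apply Rmult_le_pos; [lra| left; apply Rinv_0_lt_compat, pow_lt; lra]| left; apply Rinv_0_lt_compat; lra]).
        nra. }
      assert ((2/3 * / R0 ^ 2 + R0 * (K1 ^ 2 * W)) / p0 = 2/3 * / R0 ^ 2 / p0 + R0 * (K1 ^ 2 * W) / p0) by (field; lra).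
      lra. }
  exists (Rmax (Psi t0) 0 + c1). split. pose proof (Rmax_r (Psi t0) 0). lra.
  intros t Ht. specialize (Hdec t Ht).
  destruct (basic t Ht) as [B1 _].
  assert (HG : Gf t <= Rmax (Psi t0) 0 + c1 * pw (r t) (2 - 2 * beta)).
  { unfold Psi in Hdec. assert (0 <= c2 / r t) by (apply Rmult_le_pos; [auto| left; apply Rinv_0_lt_compat; lra]).
    pose proof (Rmax_l (Psi t0) 0). unfold Psi in H0 |- *. lra. }
  unfold Gf in HG. rewrite pw_2m in HG by lra.
  assert (Hr2 : 0 < r t ^ 2) by (apply pow_lt; lra).
  assert (u t <= Rmax (Psi t0) 0 / r t ^ 2 + c1 * pw (r t) (- (2 * beta))).
  { apply (Rmult_le_reg_l (r t ^ 2)); auto. 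
    replace (r t ^ 2 * (Rmax (Psi t0) 0 / r t ^ 2 + c1 * pw (r t) (- (2 * beta)))) with
      (Rmax (Psi t0) 0 + c1 * (r t ^ 2 * pw (r t) (- (2 * beta)))) by (field; lra). lra. }
  assert (/ r t ^ 2 <= pw (r t) (- (2 * beta))).
  { rewrite <- pw_two by lra. rewrite <- pw_neg. apply pw_mono; lra. }
  assert (0 <= Rmax (Psi t0) 0) by apply Rmax_r.
  unfold Rdiv in H. nra.
Qed.

Lemma ratio_ge1 a b : 0 < a <= b -> 1 <= b / a.
Proof. intros [H1 H2]. apply (Rmult_le_reg_r a); auto. unfold Rdiv. rewrite Rmult_assoc, Rinv_l; lra. Qed.

Lemma step3 : exists C3, 0 <= C3 /\ forall t, t0 <= t -> Hf t <= C3.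
Proof.
  destruct beta_bounds as [Hb HP1]. destruct step2 as [C2 [HC2 Hu2]].
  destruct (basic t0 ltac:(lra)) as [_ [_ [[Hp0 _] _]]]. fold p0 in Hp0.
  set (c3 := 3 * C2 / (beta * p0 ^ 2)).
  assert (Hc3 : 0 <= c3) by (unfold c3; apply Rmult_le_pos; [lra| left; apply Rinv_0_lt_compat; apply Rmult_lt_0_compat; [lra| apply pow_lt; lra]]).
  set (Th := fun x => Hf x * exp (c3 * pw (r x) (- (2 * beta)))).
  assert (Hdec : forall t, t0 <= t -> Th t <= Th t0).
  { intros t Ht. apply (mono_decr Th (fun x => exp (c3 * pw (r x) (- (2 * beta))) *
       (r x * fm x * (6 * u x - 2 * (1 - rho r x ^ 2)) / rho r x
        - Hf x * c3 * (2 * beta) * pw (r x) (- (2 * beta)) * rho r x / r x))); auto.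
    - intros x Hx. pose proof (dH x ltac:(lra)) as D1. pose proof (dr x ltac:(lra)) as D3.
      destruct (basic x ltac:(lra)) as [B1 [B2 [B3 [B4 B5]]]].
      unfold Th, pw. auto_derive. repeat split; try (eexists; eauto); lra.
      drw D1. drw D3. field. lra.
    - intros x Hx. destruct (basic x ltac:(lra)) as [B1 [B2 [B3 [B4 B5]]]].
      destruct (Hinv x ltac:(lra)) as [I1 [I2 [I3 I4]]]. pose proof (Hu2 x ltac:(lra)) as U2.
      set (R0 := r x) in *. set (rh := rho r x) in *. set (W := pw R0 (- (2 * beta))) in *.
      assert (HW : 0 < W) by apply pw_pos.
      assert (Hrh2 : 0 < rh ^ 2 < 1) by (simpl; nra).
      assert (A : R0 * fm x * (6 * u x - 2 * (1 - rh ^ 2)) / rh <= 6 * R0 * fm x * C2 * W / p0).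
      { apply div_up. lra. assert (0 <= C2 * W) by nra. assert (0 < R0 * fm x) by nra. nra.
        assert (0 < R0 * fm x) by nra. nra. }
      assert (Bc : Hf x * c3 * (2 * beta) * W * rh / R0 >= 6 * R0 * fm x * C2 * W / p0).
      { unfold Hf, c3. fold R0.
        replace (R0 ^ 2 * fm x * (3 * C2 / (beta * p0 ^ 2)) * (2 * beta) * W * rh / R0)
          with (6 * R0 * fm x * C2 * W / p0 * (rh / p0)) by (field; repeat split; lra).
        assert (1 <= rh / p0) by (apply ratio_ge1; lra).
        assert (0 <= 6 * R0 * fm x * C2 * W / p0).
        { unfold Rdiv. apply Rmult_le_pos; [|left; apply Rinv_0_lt_compat; lra].
          assert (0 <= C2 * W) by nra. assert (0 < R0 * fm x) by nra. nra. }
        nra. }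
      assert (0 < exp (c3 * W)) by apply exp_pos.
      apply Rmult_le_0_l; lra. }
  exists (Th t0). split.
  { unfold Th. apply Rmult_le_pos; [| left; apply exp_pos]. unfold Hf.
    destruct (Hinv t0 ltac:(lra)) as [I1 _]. assert (0 < r t0 ^ 2) by (apply pow_lt; pose proof (Hr1 t0 Ht0); lra). nra. }
  intros t Ht. specialize (Hdec t Ht). unfold Th in Hdec.
  assert (1 <= exp (c3 * pw (r t) (- (2 * beta)))).
  { rewrite <- exp_0. destruct (Req_dec (c3 * pw (r t) (- (2 * beta))) 0) as [E|E]. rewrite E; lra.
    left. apply exp_increasing. assert (0 < pw (r t) (- (2 * beta))) by apply pw_pos.
    assert (0 <= c3 * pw (r t) (- (2 * beta))) by nra. lra. }
  assert (0 <= Hf t).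
  { unfold Hf. destruct (Hinv t Ht) as [I1 _]. assert (0 < r t ^ 2) by (apply pow_lt; pose proof (Hr1 t ltac:(lra)); lra). nra. }
  fold (Th t0) in Hdec. nra.
Qed.

Lemma fm_bound : exists C3, 0 <= C3 /\ forall t, t0 <= t -> fm t <= C3 / r t ^ 2.
Proof.
  destruct step3 as [C3 [HC3 H3]]. exists C3. split; auto. intros t Ht. specialize (H3 t Ht).
  unfold Hf in H3. assert (0 < r t ^ 2) by (apply pow_lt; pose proof (Hr1 t ltac:(lra)); lra).
  apply (Rmult_le_reg_l (r t ^ 2)); auto. unfold Rdiv. rewrite <- Rmult_assoc, (Rmult_comm (r t ^ 2) C3), Rmult_assoc, Rinv_r by lra. lra.
Qed.

Lemma Gp_up x C3 : t0 <= x -> 0 <= C3 -> fm x <= C3 / r x ^ 2 ->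
  r x * ((2/3 - u x) * (1 - rho r x ^ 2) - 3 * u x ^ 2 + fm x ^ 2 * rho r x ^ 2) / rho r x
    <= (2/3 + C3 ^ 2) / p0 * / r x ^ 2.
Proof.
  intros Hx HC3 F.
  destruct (basic x ltac:(lra)) as [B1 [B2 [B3 [B4 B5]]]].
  destruct (Hinv x ltac:(lra)) as [I1 [I2 [I3 I4]]].
  set (R0 := r x) in *. set (rh := rho r x) in *.
  assert (Hrh2 : 0 < rh ^ 2 < 1) by (simpl; nra).
  assert (HiR : R0 * (1 - rh ^ 2) = / R0 ^ 2) by (rewrite B5; field; lra).
  assert (HR2 : 0 < / R0 ^ 2) by (apply Rinv_0_lt_compat, pow_lt; lra).
  assert (Hf2 : R0 * fm x ^ 2 <= C3 ^ 2 * / R0 ^ 2).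
  { assert (fm x ^ 2 <= (C3 / R0 ^ 2) ^ 2) by (apply pow_incr; lra).
    assert (R0 * fm x ^ 2 <= R0 * (C3 / R0 ^ 2) ^ 2) by (apply Rmult_le_compat_l; lra).
    assert (R0 * (C3 / R0 ^ 2) ^ 2 = C3 ^ 2 * / R0 ^ 2 * / R0 ^ 3 * R0 ^ 2) by (field; lra).
    assert (/ R0 ^ 3 * R0 ^ 2 <= 1) by (replace (/ R0 ^ 3 * R0 ^ 2) with (/ R0) by (field; lra); rewrite <- Rinv_1; apply Rinv_le_contravar; lra).
    assert (0 <= C3 ^ 2 * / R0 ^ 2) by (apply Rmult_le_pos; [apply pow2_ge_0| lra]). nra. }
  replace ((2/3 + C3 ^ 2) / p0 * / R0 ^ 2) with ((2/3 * / R0 ^ 2 + C3 ^ 2 * / R0 ^ 2) / p0) by (field; lra).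
  apply div_up. lra. assert (0 <= C3 ^ 2 * / R0 ^ 2) by (apply Rmult_le_pos; [apply pow2_ge_0| lra]). lra.
  assert (Hu : 0 < u x) by (unfold u; lra).
  assert (R0 * (u x * (1 - rh ^ 2)) >= 0) by (apply Rle_ge, Rmult_le_pos; [lra| apply Rmult_le_pos; lra]).
  assert (0 <= u x ^ 2) by apply pow2_ge_0.
  assert (R0 * (u x ^ 2) >= 0) by (apply Rle_ge, Rmult_le_pos; lra).
  assert (R0 * (fm x ^ 2 * rh ^ 2) <= R0 * fm x ^ 2).
  { assert (0 <= fm x ^ 2) by apply pow2_ge_0. assert (fm x ^ 2 * rh ^ 2 <= fm x ^ 2) by nra.
    apply Rmult_le_compat_l; lra. }
  replace (R0 * ((2 / 3 - u x) * (1 - rh ^ 2) - 3 * u x ^ 2 + fm x ^ 2 * rh ^ 2)) with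
    (2/3 * (R0 * (1 - rh ^ 2)) - R0 * (u x * (1 - rh ^ 2)) - 3 * (R0 * u x ^ 2) + R0 * (fm x ^ 2 * rh ^ 2)) by ring.
  lra.
Qed.

Lemma step4 : exists C4, 0 <= C4 /\ forall t, t0 <= t -> Gf t <= C4.
Proof.
  destruct fm_bound as [C3 [HC3 F3]].
  destruct (basic t0 ltac:(lra)) as [_ [_ [[Hp0 _] _]]]. fold p0 in Hp0.
  set (c4 := (2/3 + C3 ^ 2) / p0 ^ 2).
  assert (Hc4 : 0 <= c4) by (unfold c4; apply Rmult_le_pos; [nra| left; apply Rinv_0_lt_compat; apply pow_lt; lra]).
  set (Ps := fun x => Gf x + c4 / r x).
  assert (Hdec : forall t, t0 <= t -> Ps t <= Ps t0).
  { intros t Ht. apply (mono_decr Ps (fun x =>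
       r x * ((2/3 - u x) * (1 - rho r x ^ 2) - 3 * u x ^ 2 + fm x ^ 2 * rho r x ^ 2) / rho r x
       - c4 * rho r x / r x ^ 2)); auto.
    - intros x Hx. pose proof (dG x ltac:(lra)) as D1. pose proof (dr x ltac:(lra)) as D3.
      destruct (basic x ltac:(lra)) as [B1 [B2 [B3 [B4 B5]]]].
      unfold Ps. auto_derive. repeat split; try (eexists; eauto); lra.
      drw D1. drw D3. field. lra.
    - intros x Hx. destruct (basic x ltac:(lra)) as [B1 [B2 [B3 [B4 B5]]]].
      pose proof (Gp_up x C3 ltac:(lra) HC3 (F3 x ltac:(lra))).
      assert (c4 * rho r x / r x ^ 2 >= (2/3 + C3 ^ 2) / p0 * / r x ^ 2).
      { unfold c4. replace ((2 / 3 + C3 ^ 2) / p0 ^ 2 * rho r x / r x ^ 2) with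
          ((2/3 + C3 ^ 2) / p0 * / r x ^ 2 * (rho r x / p0)) by (field; lra).
        assert (1 <= rho r x / p0) by (apply ratio_ge1; lra).
        assert (0 <= (2/3 + C3 ^ 2) / p0 * / r x ^ 2).
        { apply Rmult_le_pos; [apply Rmult_le_pos; [nra| left; apply Rinv_0_lt_compat; lra]| left; apply Rinv_0_lt_compat, pow_lt; lra]. }
        nra. }
      lra. }
  exists (Rmax (Ps t0) 0). split. apply Rmax_r.
  intros t Ht. specialize (Hdec t Ht).
  assert (0 <= c4 / r t) by (apply Rmult_le_pos; [auto| left; apply Rinv_0_lt_compat; pose proof (Hr1 t ltac:(lra)); lra]).
  assert (Gf t <= Ps t) by (unfold Ps; lra).
  pose proof (Rmax_l (Ps t0) 0). lra.
Qed.

Lemma r_lin t : t0 <= t -> r0 + p0 * (t - t0) <= r t.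
Proof.
  intro Ht. destruct (basic t0 ltac:(lra)) as [_ [_ [[Hp0 _] _]]].
  assert (r t0 - p0 * t0 <= r t - p0 * t); [|fold r0 in H; lra].
  apply (mono_incr (fun x => r x - p0 * x) (fun x => rho r x - p0)); auto.
  intros x Hx. pose proof (dr x ltac:(lra)) as D3. auto_derive. eexists; eauto. drw D3. ring.
  intros x Hx. destruct (basic x ltac:(lra)) as [_ [_ [[_ B] _]]]. fold p0 in B. lra.
Qed.

Lemma r_unb M T : exists t, T <= t /\ t0 <= t /\ M < r t.
Proof.
  destruct (basic t0 ltac:(lra)) as [Hr0 [_ [[Hp0 _] _]]]. fold r0 in Hr0.
  set (t := Rmax T (t0 + Rabs M / p0 + 1)).
  exists t. assert (T <= t) by apply Rmax_l. assert (t0 + Rabs M / p0 + 1 <= t) by apply Rmax_r.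
  assert (0 <= Rabs M / p0) by (apply Rmult_le_pos; [apply Rabs_pos| left; apply Rinv_0_lt_compat; lra]).
  split; auto. split. lra. pose proof (r_lin t ltac:(lra)).
  assert (p0 * (t - t0) >= p0 * (Rabs M / p0 + 1)) by (apply Rle_ge, Rmult_le_compat_l; lra).
  assert (p0 * (Rabs M / p0 + 1) = Rabs M + p0) by (field; lra).
  pose proof (Rle_abs M). lra.
Qed.

Lemma lim_ge (g : R -> R) L a T T' m : 0 <= a -> (forall t, T <= t -> Rabs (g t - L) <= a / r t) ->
  (forall t, T' <= t -> m <= g t) -> m <= L.
Proof.
  intros Ha HL Hm. apply Rnot_lt_le. intro Hlt.
  destruct (r_unb (a / (m - L)) (Rmax (Rmax T T') t0)) as [t [Ht1 [Ht2 Ht3]]].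
  assert (Rmax T T' <= Rmax (Rmax T T') t0) by apply Rmax_l.
  assert (T <= Rmax T T') by apply Rmax_l. assert (T' <= Rmax T T') by apply Rmax_r.
  specialize (HL t ltac:(lra)). specialize (Hm t ltac:(lra)).
  destruct (basic t Ht2) as [B1 _].
  assert (a / r t < m - L).
  { apply (Rmult_lt_reg_r (r t)); [lra|]. unfold Rdiv. rewrite Rmult_assoc, Rinv_l by lra.
    apply (Rmult_lt_reg_r (/ (m - L))). apply Rinv_0_lt_compat; lra.
    rewrite Rmult_1_r. replace ((m - L) * r t * / (m - L)) with (r t) by (field; lra). exact Ht3. }
  apply Rabs_le_between in HL. lra.
Qed.

Lemma Gp_low x C4 : t0 <= x -> 0 <= C4 -> Gf x <= C4 ->
  - (3 * C4 ^ 2) / p0 * / r x ^ 2 + (/ 3 * / r x ^ 2 - 3 * C4 ^ 2 * / r x ^ 3) / p0 * (1 - 1)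
   <= r x * ((2/3 - u x) * (1 - rho r x ^ 2) - 3 * u x ^ 2 + fm x ^ 2 * rho r x ^ 2) / rho r x /\
  (9 * C4 ^ 2 <= r x -> 0 <= r x * ((2/3 - u x) * (1 - rho r x ^ 2) - 3 * u x ^ 2 + fm x ^ 2 * rho r x ^ 2) / rho r x).
Proof.
  intros Hx HC4 HG.
  destruct (basic x ltac:(lra)) as [B1 [B2 [B3 [B4 B5]]]].
  destruct (Hinv x ltac:(lra)) as [I1 [I2 [I3 I4]]].
  unfold Gf in HG.
  set (R0 := r x) in *. set (rh := rho r x) in *.
  assert (Hrh2 : 0 < rh ^ 2 < 1) by (simpl; nra).
  assert (HiR : R0 * (1 - rh ^ 2) = / R0 ^ 2) by (rewrite B5; field; lra).
  assert (HR2 : 0 < / R0 ^ 2) by (apply Rinv_0_lt_compat, pow_lt; lra).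
  assert (Hu : 0 < u x) by (unfold u; lra).
  assert (Hu3 : u x < 1/3) by (unfold u; lra).
  assert (Hub : u x <= C4 * / R0 ^ 2).
  { apply (Rmult_le_reg_l (R0 ^ 2)). apply pow_lt; lra.
    replace (R0 ^ 2 * (C4 * / R0 ^ 2)) with C4 by (field; lra). lra. }
  assert (Hu2 : R0 * u x ^ 2 <= C4 ^ 2 * / R0 ^ 3).
  { assert (u x ^ 2 <= (C4 * / R0 ^ 2) ^ 2) by (apply pow_incr; lra).
    assert (R0 * u x ^ 2 <= R0 * (C4 * / R0 ^ 2) ^ 2) by (apply Rmult_le_compat_l; lra).
    replace (R0 * (C4 * / R0 ^ 2) ^ 2) with (C4 ^ 2 * / R0 ^ 3) in H0 by (field; lra). lra. }
  assert (HR3 : / R0 ^ 3 <= / R0 ^ 2).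
  { apply Rinv_le_contravar. apply pow_lt; lra. simpl. nra. }
  assert (HN : R0 * ((2 / 3 - u x) * (1 - rh ^ 2) - 3 * u x ^ 2 + fm x ^ 2 * rh ^ 2) >=
               / 3 * / R0 ^ 2 - 3 * (C4 ^ 2 * / R0 ^ 3)).
  { assert (R0 * ((1/3 - u x) * (1 - rh ^ 2)) >= 0) by (apply Rle_ge, Rmult_le_pos; [lra| apply Rmult_le_pos; lra]).
    assert (R0 * (fm x ^ 2 * rh ^ 2) >= 0) by (apply Rle_ge, Rmult_le_pos; [lra| apply Rmult_le_pos; apply pow2_ge_0]).
    replace (R0 * ((2 / 3 - u x) * (1 - rh ^ 2) - 3 * u x ^ 2 + fm x ^ 2 * rh ^ 2)) with
      (/3 * (R0 * (1 - rh ^ 2)) + R0 * ((1/3 - u x) * (1 - rh ^ 2)) - 3 * (R0 * u x ^ 2) + R0 * (fm x ^ 2 * rh ^ 2)) by field.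
    lra. }
  split.
  - replace (- (3 * C4 ^ 2) / p0 * / R0 ^ 2 + (/ 3 * / R0 ^ 2 - 3 * C4 ^ 2 * / R0 ^ 3) / p0 * (1 - 1))
      with (- (3 * C4 ^ 2 * / R0 ^ 2) / p0) by (field; lra).
    apply div_low. lra. apply Rmult_le_pos; [nra| lra].
    assert (0 <= C4 ^ 2) by apply pow2_ge_0. nra.
  - intro H9. unfold Rdiv. apply Rmult_le_pos; [| left; apply Rinv_0_lt_compat; lra].
    assert (3 * (C4 ^ 2 * / R0 ^ 3) <= / 3 * / R0 ^ 2); [|lra].
    replace (3 * (C4 ^ 2 * / R0 ^ 3)) with (/ 3 * / R0 ^ 2 * (9 * C4 ^ 2 / R0)) by (field; lra).
    assert (9 * C4 ^ 2 / R0 <= 1).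
    { apply (Rmult_le_reg_r R0); [lra|]. unfold Rdiv. rewrite Rmult_assoc, Rinv_l by lra. lra. }
    assert (0 <= / 3 * / R0 ^ 2) by lra. nra.
Qed.

Definition Gp x := r x * ((2/3 - u x) * (1 - rho r x ^ 2) - 3 * u x ^ 2 + fm x ^ 2 * rho r x ^ 2) / rho r x.

Lemma G_lim : exists mu a, 0 < mu /\ 0 <= a /\ forall t, t0 <= t -> Rabs (Gf t - mu) <= a / r t.
Proof.
  destruct fm_bound as [C3 [HC3 F3]]. destruct step4 as [C4 [HC4 G4]].
  destruct (basic t0 ltac:(lra)) as [_ [_ [[Hp0 _] _]]]. fold p0 in Hp0.
  set (K5 := (2/3 + 3 * C4 ^ 2 + C3 ^ 2) / p0).
  assert (HK5 : 0 <= K5) by (unfold K5; apply Rmult_le_pos; [nra| left; apply Rinv_0_lt_compat; lra]).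
  assert (Hb : forall x, t0 <= x -> - K5 * / r x ^ 2 <= Gp x <= K5 * / r x ^ 2).
  { intros x Hx. destruct (basic x Hx) as [B1 _].
    assert (0 < / r x ^ 2) by (apply Rinv_0_lt_compat, pow_lt; lra).
    pose proof (Gp_up x C3 Hx HC3 (F3 x Hx)). destruct (Gp_low x C4 Hx HC4 (G4 x Hx)) as [L _].
    fold (Gp x) in H0, L. split.
    - replace (- (3 * C4 ^ 2) / p0 * / r x ^ 2 + (/ 3 * / r x ^ 2 - 3 * C4 ^ 2 * / r x ^ 3) / p0 * (1 - 1))
        with (- (3 * C4 ^ 2 / p0) * / r x ^ 2) in L by (field; lra).
      assert (3 * C4 ^ 2 / p0 <= K5).
      { unfold K5. unfold Rdiv. apply Rmult_le_compat_r. left; apply Rinv_0_lt_compat; lra. nra. }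
      nra.
    - assert ((2/3 + C3 ^ 2) / p0 <= K5).
      { unfold K5. unfold Rdiv. apply Rmult_le_compat_r. left; apply Rinv_0_lt_compat; lra. nra. }
      nra. }
  set (a := K5 / p0).
  assert (Ha : 0 <= a) by (unfold a; apply Rmult_le_pos; [lra| left; apply Rinv_0_lt_compat; lra]).
  assert (Hap : a * p0 = K5) by (unfold a; field; lra).
  assert (Hder2 : forall x c, t0 <= x -> is_derive (fun y => Gf y + c / r y) x (Gp x - c * rho r x / r x ^ 2)).
  { intros x c Hx. pose proof (dG x Hx) as D1. pose proof (dr x Hx) as D3.
    destruct (basic x Hx) as [B1 [_ [[Hq1 Hq2] [B4 _]]]]. destruct (basic t0 ltac:(lra)) as [_ [_ [[Hp00 B3] _]]]. auto_derive. repeat split; try (eexists; eauto); lra.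
    drw D1. drw D3. unfold Gp. field. split; lra. }
  destruct (lim_rate Gf (fun t => a / r t) t0) as [mu Hmu].
  - intros t Ht. destruct (basic t Ht) as [B1 _]. apply Rmult_le_pos; [lra| left; apply Rinv_0_lt_compat; lra].
  - intros t s [Ht Hs]. apply (mono_decr (fun y => Gf y + a / r y) (fun x => Gp x - a * rho r x / r x ^ 2)); auto.
    intros x Hx. apply Hder2. lra.
    intros x Hx. destruct (basic x ltac:(lra)) as [B1 [_ [[_ B3] _]]]. destruct (Hb x ltac:(lra)) as [_ Hu].
    assert (0 < / r x ^ 2) by (apply Rinv_0_lt_compat, pow_lt; lra).
    assert (a * rho r x / r x ^ 2 >= K5 * / r x ^ 2).
    { assert (0 <= a * (rho r x - p0) * / r x ^ 2) by (apply Rmult_le_pos; [apply Rmult_le_pos; lra| lra]).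
      assert (a * rho r x / r x ^ 2 - K5 * / r x ^ 2 = a * (rho r x - p0) * / r x ^ 2) by (rewrite <- Hap; unfold Rdiv; ring).
      lra. } lra.
  - intros t s [Ht Hs].
    replace (Gf t - a / r t) with (Gf t + (- a) / r t) by (unfold Rdiv; ring).
    replace (Gf s - a / r s) with (Gf s + (- a) / r s) by (unfold Rdiv; ring).
    apply (mono_incr (fun y => Gf y + (- a) / r y) (fun x => Gp x - (- a) * rho r x / r x ^ 2)); auto.
    intros x Hx. apply Hder2. lra.
    intros x Hx. destruct (basic x ltac:(lra)) as [B1 [_ [[_ B3] _]]]. destruct (Hb x ltac:(lra)) as [Hl _].
    assert (0 < / r x ^ 2) by (apply Rinv_0_lt_compat, pow_lt; lra).
    assert (a * rho r x / r x ^ 2 >= K5 * / r x ^ 2).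
    { assert (0 <= a * (rho r x - p0) * / r x ^ 2) by (apply Rmult_le_pos; [apply Rmult_le_pos; lra| lra]).
      assert (a * rho r x / r x ^ 2 - K5 * / r x ^ 2 = a * (rho r x - p0) * / r x ^ 2) by (rewrite <- Hap; unfold Rdiv; ring).
      lra. } 
    unfold Rdiv in *. lra.
  - exists mu, a. split; [|split; auto].
    destruct (r_unb (9 * C4 ^ 2) t0) as [T2 [_ [HT2 HrT2]]].
    assert (HG2 : 0 < Gf T2).
    { unfold Gf, u. destruct (Hinv T2 HT2) as [_ [_ [I3 _]]]. destruct (basic T2 HT2) as [B1 _].
      apply Rmult_lt_0_compat. apply pow_lt; lra. lra. }
    assert (Gf T2 <= mu); [|lra].
    apply (lim_ge Gf mu a t0 T2); auto.
    intros t Ht. apply (mono_incr Gf Gp); auto.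
    intros x Hx. apply dG; lra.
    intros x Hx. destruct (Gp_low x C4 ltac:(lra) HC4 (G4 x ltac:(lra))) as [_ P2]. apply P2.
    assert (r T2 <= r x) by (apply r_mono; auto; lra). lra.
Qed.

Definition Hp x := r x * fm x * (6 * u x - 2 * (1 - rho r x ^ 2)) / rho r x.

Lemma H_lim : exists nu a, 0 < nu /\ 0 <= a /\ forall t, t0 <= t -> Rabs (Hf t - nu) <= a / r t.
Proof.
  destruct fm_bound as [C3 [HC3 F3]]. destruct step4 as [C4 [HC4 G4]].
  destruct (basic t0 ltac:(lra)) as [Hr0 [_ [[Hp0 _] _]]]. fold p0 in Hp0. fold r0 in Hr0.
  set (K6 := C3 * (6 * C4 + 2) / p0).
  assert (HK6 : 0 <= K6) by (unfold K6; apply Rmult_le_pos; [nra| left; apply Rinv_0_lt_compat; lra]).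
  assert (Hb : forall x, t0 <= x -> - K6 * / r x ^ 2 <= Hp x <= K6 * / r x ^ 2 /\ - 2 * fm x / rho r x <= Hp x).
  { intros x Hx. destruct (basic x Hx) as [B1 [B2 [B3 [B4 B5]]]].
    destruct (Hinv x Hx) as [I1 [I2 [I3 I4]]]. pose proof (F3 x Hx) as F. pose proof (G4 x Hx) as G.
    unfold Gf in G. unfold Hp.
    set (R0 := r x) in *. set (rh := rho r x) in *.
    assert (Hrh2 : 0 < rh ^ 2 < 1) by (simpl; nra).
    assert (HR2 : 0 < / R0 ^ 2) by (apply Rinv_0_lt_compat, pow_lt; lra).
    assert (Hu : 0 < u x) by (unfold u; lra).
    assert (Hub : u x <= C4 * / R0 ^ 2).
    { apply (Rmult_le_reg_l (R0 ^ 2)). apply pow_lt; lra.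
      replace (R0 ^ 2 * (C4 * / R0 ^ 2)) with C4 by (field; lra). lra. }
    assert (Hfb : fm x <= C3 * / R0 ^ 2) by exact F.
    assert (HiR1 : / R0 ^ 2 <= 1) by (rewrite <- Rinv_1; apply Rinv_le_contravar; [lra| simpl; nra]).
    assert (N1 : R0 * fm x * (6 * u x) <= 6 * C3 * C4 * / R0 ^ 2).
    { assert (R0 * fm x * u x <= R0 * (C3 * / R0 ^ 2) * (C4 * / R0 ^ 2)).
      { apply Rmult_le_compat. nra. lra. apply Rmult_le_compat_l; lra. lra. }
      assert (R0 * (C3 * / R0 ^ 2) * (C4 * / R0 ^ 2) = C3 * C4 * / R0 ^ 2 * (/ R0 ^ 2 * R0)) by (field; lra).
      assert (/ R0 ^ 2 * R0 <= 1) by (replace (/ R0 ^ 2 * R0) with (/ R0) by (field; lra); rewrite <- Rinv_1; apply Rinv_le_contravar; lra).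
      assert (0 <= C3 * C4 * / R0 ^ 2) by (apply Rmult_le_pos; [nra| lra]).
      nra. }
    assert (N2 : R0 * fm x * (2 * (1 - rh ^ 2)) = 2 * fm x * / R0 ^ 2) by (rewrite B5; field; lra).
    assert (N4 : 2 * fm x * / R0 ^ 2 <= 2 * fm x) by nra.
    assert (N3 : 2 * fm x * / R0 ^ 2 <= 2 * C3 * / R0 ^ 2) by lra.
    assert (N5 : 0 <= R0 * fm x * (6 * u x)) by (apply Rmult_le_pos; nra).
    replace (R0 * fm x * (6 * u x - 2 * (1 - rh ^ 2))) with (R0 * fm x * (6 * u x) - R0 * fm x * (2 * (1 - rh ^ 2))) by ring.
    rewrite N2. split; [split|].
    - replace (- K6 * / R0 ^ 2) with (- (C3 * (6 * C4 + 2) * / R0 ^ 2) / p0) by (unfold K6; field; lra).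
      apply div_low. lra. apply Rmult_le_pos; nra. nra.
    - replace (K6 * / R0 ^ 2) with ((C3 * (6 * C4 + 2) * / R0 ^ 2) / p0) by (unfold K6; field; lra).
      apply div_up. lra. apply Rmult_le_pos; nra. nra.
    - unfold Rdiv. apply Rmult_le_compat_r. left; apply Rinv_0_lt_compat; lra. lra. }
  set (a := K6 / p0).
  assert (Ha : 0 <= a) by (unfold a; apply Rmult_le_pos; [lra| left; apply Rinv_0_lt_compat; lra]).
  assert (Hap : a * p0 = K6) by (unfold a; field; lra).
  assert (Hder2 : forall x c, t0 <= x -> is_derive (fun y => Hf y + c / r y) x (Hp x - c * rho r x / r x ^ 2)).
  { intros x c Hx. pose proof (dH x Hx) as D1. pose proof (dr x Hx) as D3.
    destruct (basic x Hx) as [B1 [_ [[Hq1 Hq2] [B4 _]]]]. auto_derive. repeat split; try (eexists; eauto); lra.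
    drw D1. drw D3. unfold Hp. field. split; lra. }
  destruct (lim_rate Hf (fun t => a / r t) t0) as [nu Hnu].
  - intros t Ht. destruct (basic t Ht) as [B1 _]. apply Rmult_le_pos; [lra| left; apply Rinv_0_lt_compat; lra].
  - intros t s [Ht Hs]. apply (mono_decr (fun y => Hf y + a / r y) (fun x => Hp x - a * rho r x / r x ^ 2)); auto.
    intros x Hx. apply Hder2. lra.
    intros x Hx. destruct (basic x ltac:(lra)) as [B1 [_ [[_ B3] _]]]. destruct (Hb x ltac:(lra)) as [[_ Hu] _].
    assert (0 < / r x ^ 2) by (apply Rinv_0_lt_compat, pow_lt; lra).
    assert (a * rho r x / r x ^ 2 >= K6 * / r x ^ 2).
    { assert (0 <= a * (rho r x - p0) * / r x ^ 2) by (apply Rmult_le_pos; [apply Rmult_le_pos; lra| lra]).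
      assert (a * rho r x / r x ^ 2 - K6 * / r x ^ 2 = a * (rho r x - p0) * / r x ^ 2) by (rewrite <- Hap; unfold Rdiv; ring).
      lra. }
    lra.
  - intros t s [Ht Hs].
    replace (Hf t - a / r t) with (Hf t + (- a) / r t) by (unfold Rdiv; ring).
    replace (Hf s - a / r s) with (Hf s + (- a) / r s) by (unfold Rdiv; ring).
    apply (mono_incr (fun y => Hf y + (- a) / r y) (fun x => Hp x - (- a) * rho r x / r x ^ 2)); auto.
    intros x Hx. apply Hder2. lra.
    intros x Hx. destruct (basic x ltac:(lra)) as [B1 [_ [[_ B3] _]]]. destruct (Hb x ltac:(lra)) as [[Hl _] _].
    assert (0 < / r x ^ 2) by (apply Rinv_0_lt_compat, pow_lt; lra).
    assert (a * rho r x / r x ^ 2 >= K6 * / r x ^ 2).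
    { assert (0 <= a * (rho r x - p0) * / r x ^ 2) by (apply Rmult_le_pos; [apply Rmult_le_pos; lra| lra]).
      assert (a * rho r x / r x ^ 2 - K6 * / r x ^ 2 = a * (rho r x - p0) * / r x ^ 2) by (rewrite <- Hap; unfold Rdiv; ring).
      lra. }
    unfold Rdiv in *. lra.
  - exists nu, a. split; [|split; auto].
    set (c := 2 / p0 ^ 2).
    set (h0 := Hf t0 * exp (- (c / r0))).
    assert (Hh0 : 0 < h0).
    { unfold h0, Hf. destruct (Hinv t0 ltac:(lra)) as [I1 _].
      apply Rmult_lt_0_compat; [| apply exp_pos]. apply Rmult_lt_0_compat; auto. apply pow_lt; pose proof (Hr1 t0 Ht0); lra. }
    assert (h0 <= nu); [|lra].
    apply (lim_ge Hf nu a t0 t0); auto.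
    intros t Ht.
    assert (M : Hf t0 * exp (- (c / r t0)) <= Hf t * exp (- (c / r t))).
    { apply (mono_incr (fun x => Hf x * exp (- (c / r x)))
        (fun x => exp (- (c / r x)) * (Hp x + Hf x * c * rho r x / r x ^ 2))); auto.
      - intros x Hx. pose proof (dH x ltac:(lra)) as D1. pose proof (dr x ltac:(lra)) as D3.
        destruct (basic x ltac:(lra)) as [B1 [_ [[Hq1 Hq2] [B4 _]]]]. auto_derive. repeat split; try (eexists; eauto); lra.
        drw D1. drw D3. unfold Hp. unfold Rdiv. field. split; lra.
      - intros x Hx. destruct (basic x ltac:(lra)) as [B1 [_ [[_ B3] [B4 _]]]].
        destruct (Hb x ltac:(lra)) as [_ Hl]. destruct (Hinv x ltac:(lra)) as [I1 _].
        apply Rmult_le_pos; [left; apply exp_pos|].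
        assert (Hf x * c * rho r x / r x ^ 2 = 2 * fm x * rho r x / p0 ^ 2) by (unfold Hf, c; field; lra).
        assert (2 * fm x / rho r x <= 2 * fm x * rho r x / p0 ^ 2).
        { apply (Rmult_le_reg_r (rho r x * p0 ^ 2)). apply Rmult_lt_0_compat; [lra| apply pow_lt; lra].
          replace (2 * fm x / rho r x * (rho r x * p0 ^ 2)) with (2 * fm x * p0 ^ 2) by (field; lra).
          replace (2 * fm x * rho r x / p0 ^ 2 * (rho r x * p0 ^ 2)) with (2 * fm x * rho r x ^ 2) by (field; lra).
          apply Rmult_le_compat_l. lra. apply pow_incr. lra. }
        unfold Rdiv in *. lra. }
    fold r0 in M. fold h0 in M.
    assert (1 <= exp (c / r t)).
    { rewrite <- exp_0. destruct (basic t Ht) as [B1 _].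
      assert (0 <= c / r t) by (unfold c; apply Rmult_le_pos; [apply Rmult_le_pos; [lra| left; apply Rinv_0_lt_compat, pow_lt; lra]| left; apply Rinv_0_lt_compat; lra]).
      destruct (Req_dec (c / r t) 0) as [E|E]. rewrite E; lra. left; apply exp_increasing; lra. }
    assert (Hf t * exp (- (c / r t)) * exp (c / r t) = Hf t) by (rewrite Rmult_assoc, <- exp_plus; replace (- (c / r t) + c / r t) with 0 by ring; rewrite exp_0; ring).
    assert (h0 * exp (c / r t) <= Hf t * exp (- (c / r t)) * exp (c / r t)) by (apply Rmult_le_compat_r; [left; apply exp_pos| lra]).
    nra.
Qed.

Lemma r_minus_t : exists D, 0 <= D /\ forall t, t0 <= t -> Rabs (r t - t) <= D.
Proof.
  destruct (basic t0 ltac:(lra)) as [Hr0 [_ [[Hp0 _] _]]]. fold p0 in Hp0. fold r0 in Hr0.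
  exists (Rabs (r0 - t0) + / (2 * p0)).
  assert (0 < / (2 * p0)) by (apply Rinv_0_lt_compat; lra).
  split. pose proof (Rabs_pos (r0 - t0)). lra.
  intros t Ht.
  assert (U : r t - t <= r0 - t0).
  { apply (mono_decr (fun x => r x - x) (fun x => rho r x - 1)); auto.
    intros x Hx. pose proof (dr x ltac:(lra)) as D3. auto_derive. eexists; eauto. drw D3. ring.
    intros x Hx. destruct (basic x ltac:(lra)) as [_ [_ [_ [B4 _]]]]. lra. }
  assert (L : r0 - t0 - / (2 * p0 * r0 ^ 2) <= r t - t - / (2 * p0 * r t ^ 2)).
  { apply (mono_incr (fun x => r x - x - / (2 * p0 * r x ^ 2))
       (fun x => rho r x - 1 + rho r x / (p0 * r x ^ 3))); auto.
    intros x Hx. pose proof (dr x ltac:(lra)) as D3. destruct (basic x ltac:(lra)) as [B1 _].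
    auto_derive. repeat split; try (eexists; eauto).
    apply Rgt_not_eq. assert (0 < r x * (r x * 1)) by nra. nra.
    drw D3. field. lra.
    intros x Hx. destruct (basic x ltac:(lra)) as [B1 [_ [[_ B3] [B4 B5]]]].
    assert (rho r x / (p0 * r x ^ 3) >= / r x ^ 3).
    { assert (0 < / r x ^ 3) by (apply Rinv_0_lt_compat, pow_lt; lra).
      replace (rho r x / (p0 * r x ^ 3)) with (/ r x ^ 3 * (rho r x / p0)) by (field; lra).
      assert (1 <= rho r x / p0) by (apply ratio_ge1; lra). nra. }
    rewrite <- B5 in H0. nra. }
  assert (/ (2 * p0 * r0 ^ 2) <= / (2 * p0)).
  { apply Rinv_le_contravar. lra. assert (1 <= r0 ^ 2) by (simpl; nra). nra. }
  assert (0 <= / (2 * p0 * r t ^ 2)).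
  { destruct (basic t Ht) as [B1 _]. left; apply Rinv_0_lt_compat. apply Rmult_lt_0_compat. lra. apply pow_lt; lra. }
  pose proof (Rle_abs (r0 - t0)). pose proof (Rabs_pos (r0 - t0)). 
  assert (- Rabs (r0 - t0) <= r0 - t0) by (pose proof (Rle_abs (- (r0 - t0))) as HH5; rewrite Rabs_Ropp in HH5; lra).
  apply Rabs_le. lra.
Qed.

Lemma final : filterlim fp (Rbar_locally p_infty) (locally (2/3)) /\
  filterlim fm (Rbar_locally p_infty) (locally 0) /\ has_asymptotics fp fm.
Proof.
  destruct G_lim as [mu [a [Hmu [Ha HG]]]].
  destruct H_lim as [nu [b [Hnu [Hb HH]]]].
  destruct r_minus_t as [D [HD HrD]].
  set (T := Rmax t0 (2 * D + 1)).
  assert (HT1 : t0 <= T) by apply Rmax_l. assert (HT2 : 2 * D + 1 <= T) by apply Rmax_r.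
  assert (HTp : 0 < T) by lra.
  set (C := Rmax (8 * a + 6 * Rabs mu * D) (8 * b + 6 * Rabs nu * D)).
  assert (HC1 : 8 * a + 6 * Rabs mu * D <= C) by apply Rmax_l.
  assert (HC2 : 8 * b + 6 * Rabs nu * D <= C) by apply Rmax_r.
  assert (Hasy : forall t, T <= t -> Rabs (fp t - 2/3 - mu / t ^ 2) <= C / t ^ 3 /\
                                     Rabs (fm t - nu / t ^ 2) <= C / t ^ 3).
  { intros t Ht. assert (Ht0' : t0 <= t) by lra. specialize (HrD t Ht0').
    assert (t <= 2 * r t) by (apply Rabs_le_between in HrD; lra).
    assert (0 < / t ^ 3) by (apply Rinv_0_lt_compat, pow_lt; lra).
    split.
    - replace (fp t - 2/3) with (u t) by reflexivity.
      eapply Rle_trans. apply (conv (u t) mu a D t (r t)); auto. lra. apply HG; auto.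
      unfold Rdiv. apply Rmult_le_compat_r; lra.
    - eapply Rle_trans. apply (conv (fm t) nu b D t (r t)); auto. lra. apply HH; auto.
      unfold Rdiv. apply Rmult_le_compat_r; lra. }
  assert (HC0 : 0 <= C) by (pose proof (Rabs_pos mu); nra).
  assert (Hl : forall (f : R -> R) l m, (forall t, T <= t -> Rabs (f t - l - m / t ^ 2) <= C / t ^ 3) ->
              filterlim f (Rbar_locally p_infty) (locally l)).
  { intros f l m Hf. apply (lim_inf f l (Rabs m + C) (Rmax T 1)). 
    pose proof (Rmax_r T 1); lra. pose proof (Rabs_pos m); lra.
    intros x Hx. assert (T <= x) by (pose proof (Rmax_l T 1); lra). assert (1 <= x) by (pose proof (Rmax_r T 1); lra).
    specialize (Hf x H).
    assert (Rabs (m / x ^ 2) <= Rabs m / x).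
    { unfold Rdiv. rewrite Rabs_mult, (Rabs_right (/ x ^ 2)) by (left; apply Rinv_0_lt_compat, pow_lt; lra).
      apply Rmult_le_compat_l. apply Rabs_pos. apply Rinv_le_contravar. lra. simpl; nra. }
    assert (C / x ^ 3 <= C / x).
    { unfold Rdiv. apply Rmult_le_compat_l; auto. apply Rinv_le_contravar. lra. simpl; nra. }
    replace (f x - l) with ((f x - l - m / x ^ 2) + m / x ^ 2) by ring.
    eapply Rle_trans. apply Rabs_triang. unfold Rdiv in *. lra. }
  split; [|split].
  - apply (Hl fp (2/3) mu). intros t Ht. apply Hasy; auto.
  - apply (Hl fm 0 nu). intros t Ht. rewrite Rminus_0_r. apply Hasy; auto.
  - exists mu, nu. split. lra. split. lra. exists C, T. split; auto.
Qed.

End Asym.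

Lemma c_plus (f g : R -> R) x : continuous f x -> continuous g x -> continuous (fun y => f y + g y) x.
Proof. intros. exact (continuous_plus f g x H H0). Qed.
Lemma c_mult (f g : R -> R) x : continuous f x -> continuous g x -> continuous (fun y => f y * g y) x.
Proof. intros. exact (continuous_mult (K:=R_AbsRing) f g x H H0). Qed.
Lemma c_const (c x : R) : continuous (fun _ : R => c) x.
Proof. apply continuous_const. Qed.
Lemma c_minus (f g : R -> R) x : continuous f x -> continuous g x -> continuous (fun y => f y - g y) x.
Proof. intros. exact (continuous_minus f g x H H0). Qed.
Lemma c_comp (f g : R -> R) x : continuous f x -> continuous g (f x) -> continuous (fun y => g (f y)) x.
Proof. intros. exact (continuous_comp f g x H H0). Qed.
Lemma c_abs (f : R -> R) x : continuous f x -> continuous (fun y => Rabs (f y)) x.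
Proof. intros. exact (continuous_Rabs_comp f x H). Qed.

Lemma Rmax_formula a b : Rmax a b = (a + b + Rabs (a - b)) / 2.
Proof. unfold Rmax. destruct (Rle_dec a b). rewrite Rabs_left1 by lra. field. rewrite Rabs_right by lra. field. Qed.
Lemma Rmin_formula a b : Rmin a b = (a + b - Rabs (a - b)) / 2.
Proof. unfold Rmin. destruct (Rle_dec a b). rewrite Rabs_left1 by lra. field. rewrite Rabs_right by lra. field. Qed.

Lemma c_max (f g : R -> R) x : continuous f x -> continuous g x -> continuous (fun y => Rmax (f y) (g y)) x.
Proof.
  intros. apply (continuous_ext (fun y => (f y + g y + Rabs (f y - g y)) * / 2)).
  intro; rewrite Rmax_formula; reflexivity.
  apply c_mult; [|apply c_const]. apply c_plus. apply c_plus; auto. apply c_abs, c_minus; auto.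
Qed.
Lemma c_min (f g : R -> R) x : continuous f x -> continuous g x -> continuous (fun y => Rmin (f y) (g y)) x.
Proof.
  intros. apply (continuous_ext (fun y => (f y + g y - Rabs (f y - g y)) * / 2)).
  intro; rewrite Rmin_formula; reflexivity.
  apply c_mult; [|apply c_const]. apply c_minus. apply c_plus; auto. apply c_abs, c_minus; auto.
Qed.

Definition cl x := Rmax 0 (Rmin x 1).
Lemma cl_id x : 0 <= x <= 1 -> cl x = x.
Proof. intro. unfold cl, Rmax, Rmin. repeat destruct Rle_dec; lra. Qed.
Lemma cl_range x : 0 <= cl x <= 1.
Proof. unfold cl, Rmax, Rmin. repeat destruct Rle_dec; lra. Qed.
Lemma cl_lip x y : Rabs (cl x - cl y) <= Rabs (x - y).
Proof.
  pose proof (Rle_abs (x - y)). pose proof (Rle_abs (- (x - y))). rewrite Rabs_Ropp in H0.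
  unfold cl, Rmax, Rmin. repeat destruct Rle_dec; apply Rabs_le; lra.
Qed.
Lemma c_cl (f : R -> R) x : continuous f x -> continuous (fun y => cl (f y)) x.
Proof. intro. unfold cl. apply (c_max (fun _ => 0)). apply c_const. apply (c_min f (fun _ => 1)); auto. apply c_const. Qed.

Lemma abs_prod_le a c K : Rabs c <= K -> Rabs (a * c) <= K * Rabs a.
Proof. intro. rewrite Rabs_mult, Rmult_comm. apply Rmult_le_compat_r. apply Rabs_pos. auto. Qed.

Definition tau t0 s := Rmax s (t0 / 2).
Definition kk r z := / (r z * rho r z).
Definition rr r z := rho r z ^ 2.
Definition F1c r t0 s x y := kk r (tau t0 s) * (cl x * (3 - rr r (tau t0 s) - 3 * cl x) + cl y * cl y * rr r (tau t0 s)).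
Definition F2c r t0 s x y := kk r (tau t0 s) * (6 * cl y * (cl x - 1)).

Section Ex.
Variable r : R -> R.
Hypothesis Hr1 : forall t, 0 < t -> 1 < r t.
Hypothesis HB : forall t, 0 < t -> is_derive (B_of r) t (A_of r t / B_of r t).
Variables t0 p q : R.
Hypothesis Ht0 : 0 < t0.

Lemma tau_ge s : t0 / 2 <= tau t0 s.
Proof. apply Rmax_r. Qed.

Lemma kk_cont z : 0 < z -> continuous (kk r) z.
Proof.
  intro Hz. pose proof (Hr1 z Hz). pose proof (inv3_bounds r Hr1 z Hz). pose proof (rho_bounds r Hr1 z Hz).
  pose proof (r_der r Hr1 HB z Hz).
  apply (ex_derive_continuous (V:=R_NormedModule)). unfold kk, rho. unfold rho in H1.
  auto_derive. repeat split; try (eexists; eauto).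
  apply Rgt_not_eq. nra.
  simpl in H0. lra.
  apply Rgt_not_eq. apply Rmult_lt_0_compat. lra. simpl in H1. exact (proj1 H1).
Qed.

Lemma rr_cont z : 0 < z -> continuous (rr r) z.
Proof.
  intro Hz. pose proof (Hr1 z Hz). pose proof (inv3_bounds r Hr1 z Hz).
  pose proof (r_der r Hr1 HB z Hz).
  apply (ex_derive_continuous (V:=R_NormedModule)). unfold rr, rho.
  auto_derive. repeat split; try (eexists; eauto).
  apply Rgt_not_eq. nra.
  simpl in H0. lra.
Qed.

Lemma tau_cont s : continuous (tau t0) s.
Proof. unfold tau. apply (c_max (fun y => y) (fun _ => t0 / 2)). apply continuous_id. apply c_const. Qed.

Lemma coef_bounds s : 0 < kk r (tau t0 s) <= kk r (t0 / 2) /\ 0 < rr r (tau t0 s) < 1.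
Proof.
  pose proof (tau_ge s). set (z := tau t0 s) in *.
  assert (Hz : 0 < z) by lra. assert (Hh : 0 < t0 / 2) by lra.
  pose proof (Hr1 z Hz). pose proof (rho_bounds r Hr1 z Hz).
  pose proof (Hr1 _ Hh). pose proof (rho_bounds r Hr1 _ Hh).
  pose proof (r_mono r Hr1 HB _ _ Hh H). pose proof (rho_mono r Hr1 HB _ _ Hh H).
  unfold kk, rr. split. split.
  apply Rinv_0_lt_compat; nra.
  apply Rinv_le_contravar. nra. apply Rmult_le_compat; lra.
  simpl. split; nra.
Qed.

Lemma existence : exists f g : R -> R, f t0 = p /\ g t0 = q /\
  forall t, is_derive f t (F1c r t0 t (f t) (g t)) /\ is_derive g t (F2c r t0 t (f t) (g t)).
Proof.
  set (M1 := kk r (t0 / 2)).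
  assert (HM1 : 0 < M1) by (destruct (coef_bounds 0) as [[A B] _]; unfold M1; lra).
  apply (picard _ _ t0 p q (6 * M1) (6 * M1)); try lra.
  - intros s x y. destruct (coef_bounds s) as [[K1 K2] [R1 R2]]. fold M1 in K2.
    pose proof (cl_range x). pose proof (cl_range y). unfold F1c.
    set (k := kk r (tau t0 s)) in *. set (w := rr r (tau t0 s)) in *. set (X := cl x) in *. set (Y := cl y) in *.
    assert (Rabs (X * (3 - w - 3 * X) + Y * Y * w) <= 4) by (apply Rabs_le; split; nra).
    rewrite Rabs_mult, (Rabs_right k) by lra.
    assert (k * Rabs (X * (3 - w - 3 * X) + Y * Y * w) <= M1 * 4).
    { apply Rmult_le_compat; try lra. apply Rabs_pos. }
    lra.
  - intros s x y. destruct (coef_bounds s) as [[K1 K2] [R1 R2]]. fold M1 in K2.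
    pose proof (cl_range x). pose proof (cl_range y). unfold F2c.
    set (k := kk r (tau t0 s)) in *. set (X := cl x) in *. set (Y := cl y) in *.
    assert (Rabs (6 * Y * (X - 1)) <= 6) by (apply Rabs_le; split; nra).
    rewrite Rabs_mult, (Rabs_right k) by lra.
    assert (k * Rabs (6 * Y * (X - 1)) <= M1 * 6).
    { apply Rmult_le_compat; try lra. apply Rabs_pos. }
    lra.
  - intros s x y x' y'. destruct (coef_bounds s) as [[K1 K2] [R1 R2]]. fold M1 in K2.
    pose proof (cl_range x). pose proof (cl_range y). pose proof (cl_range x'). pose proof (cl_range y').
    pose proof (cl_lip x x'). pose proof (cl_lip y y'). unfold F1c.
    set (k := kk r (tau t0 s)) in *. set (w := rr r (tau t0 s)) in *.
    set (X := cl x) in *. set (Y := cl y) in *. set (X' := cl x') in *. set (Y' := cl y') in *.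
    replace (k * (X * (3 - w - 3 * X) + Y * Y * w) - k * (X' * (3 - w - 3 * X') + Y' * Y' * w))
      with (k * ((X - X') * (3 - w - 3 * (X + X')) + (Y - Y') * ((Y + Y') * w))) by ring.
    rewrite Rabs_mult, (Rabs_right k) by lra.
    assert (A1 : Rabs ((X - X') * (3 - w - 3 * (X + X'))) <= 6 * Rabs (X - X')) by (apply abs_prod_le; apply Rabs_le; split; nra).
    assert (A2 : Rabs ((Y - Y') * ((Y + Y') * w)) <= 6 * Rabs (Y - Y')) by (apply abs_prod_le; apply Rabs_le; split; nra).
    assert (A3 : Rabs ((X - X') * (3 - w - 3 * (X + X')) + (Y - Y') * ((Y + Y') * w)) <= 6 * (Rabs (x - x') + Rabs (y - y'))).
    { eapply Rle_trans. apply Rabs_triang. lra. }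
    assert (k * Rabs ((X - X') * (3 - w - 3 * (X + X')) + (Y - Y') * ((Y + Y') * w)) <= M1 * (6 * (Rabs (x - x') + Rabs (y - y')))).
    { apply Rmult_le_compat; try lra. apply Rabs_pos. }
    lra.
  - intros s x y x' y'. destruct (coef_bounds s) as [[K1 K2] [R1 R2]]. fold M1 in K2.
    pose proof (cl_range x). pose proof (cl_range y). pose proof (cl_range x'). pose proof (cl_range y').
    pose proof (cl_lip x x'). pose proof (cl_lip y y'). unfold F2c.
    set (k := kk r (tau t0 s)) in *.
    set (X := cl x) in *. set (Y := cl y) in *. set (X' := cl x') in *. set (Y' := cl y') in *.
    replace (k * (6 * Y * (X - 1)) - k * (6 * Y' * (X' - 1)))
      with (k * ((Y - Y') * (6 * (X - 1)) + (X - X') * (6 * Y'))) by ring.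
    rewrite Rabs_mult, (Rabs_right k) by lra.
    assert (A1 : Rabs ((Y - Y') * (6 * (X - 1))) <= 6 * Rabs (Y - Y')) by (apply abs_prod_le; apply Rabs_le; split; nra).
    assert (A2 : Rabs ((X - X') * (6 * Y')) <= 6 * Rabs (X - X')) by (apply abs_prod_le; apply Rabs_le; split; nra).
    assert (A3 : Rabs ((Y - Y') * (6 * (X - 1)) + (X - X') * (6 * Y')) <= 6 * (Rabs (x - x') + Rabs (y - y'))).
    { eapply Rle_trans. apply Rabs_triang. lra. }
    assert (k * Rabs ((Y - Y') * (6 * (X - 1)) + (X - X') * (6 * Y')) <= M1 * (6 * (Rabs (x - x') + Rabs (y - y')))).
    { apply Rmult_le_compat; try lra. apply Rabs_pos. }
    lra.
  - intros f g Hf Hg s. unfold F1c.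
    assert (Hk : continuous (fun s => kk r (tau t0 s)) s).
    { apply (c_comp (tau t0) (kk r)). apply tau_cont. apply kk_cont. pose proof (tau_ge s); lra. }
    assert (Hw : continuous (fun s => rr r (tau t0 s)) s).
    { apply (c_comp (tau t0) (rr r)). apply tau_cont. apply rr_cont. pose proof (tau_ge s); lra. }
    assert (HX : continuous (fun s => cl (f s)) s) by (apply c_cl; auto).
    assert (HY : continuous (fun s => cl (g s)) s) by (apply c_cl; auto).
    apply (c_mult (fun s => kk r (tau t0 s))); auto.
    apply (c_plus (fun s => cl (f s) * (3 - rr r (tau t0 s) - 3 * cl (f s)))).
    apply (c_mult (fun s => cl (f s))); auto. apply (c_minus (fun s => 3 - rr r (tau t0 s))).
    apply (c_minus (fun _ => 3)); auto. apply c_const. apply (c_mult (fun _ => 3)); auto. apply c_const.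
    apply (c_mult (fun s => cl (g s) * cl (g s))); auto. apply (c_mult (fun s => cl (g s))); auto.
  - intros f g Hf Hg s. unfold F2c.
    assert (Hk : continuous (fun s => kk r (tau t0 s)) s).
    { apply (c_comp (tau t0) (kk r)). apply tau_cont. apply kk_cont. pose proof (tau_ge s); lra. }
    assert (HX : continuous (fun s => cl (f s)) s) by (apply c_cl; auto).
    assert (HY : continuous (fun s => cl (g s)) s) by (apply c_cl; auto).
    apply (c_mult (fun s => kk r (tau t0 s))); auto.
    apply (c_mult (fun s => 6 * cl (g s))). apply (c_mult (fun _ => 6)); auto. apply c_const.
    apply (c_minus (fun s => cl (f s))); auto. apply c_const.
Qed.

End Ex.

Theorem mainTheorem5 :
  forall r : R -> R,
    (forall t, 0 < t -> 1 < r t) ->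
    filterlim r (at_right 0) (locally 1) ->
    (forall t, 0 < t ->
       is_derive (A_of r) t (/ 2 * (1 - A_of r t ^ 2 / B_of r t ^ 2))) ->
    (forall t, 0 < t -> is_derive (B_of r) t (A_of r t / B_of r t)) ->
  forall t0 p q : R,
    0 < t0 -> 2/3 < p < 1 -> 0 < q < 1 ->
    (exists fp fm : R -> R,
        fp t0 = p /\ fm t0 = q /\ forall t, t0 <= t -> solves_at r fp fm t) /\
    (forall fp fm : R -> R,
        fp t0 = p -> fm t0 = q -> (forall t, t0 <= t -> solves_at r fp fm t) ->
        filterlim fp (Rbar_locally p_infty) (locally (2/3)) /\
        filterlim fm (Rbar_locally p_infty) (locally 0) /\
        has_asymptotics fp fm).
Proof.
  intros r Hr1 Hrl HA HB t0 p q Ht0 Hp Hq.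
  assert (Hconv : forall fp fm t, 0 < t -> solves_at r fp fm t ->
            is_derive fp t (Fp r fp fm t) /\ is_derive fm t (Fm r fp fm t)).
  { intros fp fm t Ht [D1 D2]. unfold Fp, Fm.
    rewrite <- (rhs1 r Hr1 t (fp t) (fm t) Ht), <- (rhs2 r Hr1 t (fp t) (fm t) Ht). split; auto. }
  split.
  - destruct (existence r Hr1 HB t0 p q Ht0) as [f [g [Hf0 [Hg0 Hd]]]].
    exists f, g. split; auto. split; auto.
    assert (Heq : forall t, t0 <= t -> 0 <= f t <= 1 -> 0 <= g t <= 1 ->
              F1c r t0 t (f t) (g t) = Fp r f g t /\ F2c r t0 t (f t) (g t) = Fm r f g t).
    { intros t Ht Hft Hgt. unfold F1c, F2c, Fp, Fm, kk, rr.
      assert (tau t0 t = t) by (unfold tau; apply Rmax_left; lra).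
      rewrite H, (cl_id _ Hft), (cl_id _ Hgt).
      pose proof (Hr1 t ltac:(lra)). pose proof (rho_bounds r Hr1 t ltac:(lra)).
      split; field; lra. }
    assert (Hcont : forall t, t0 <= t -> continuous f t /\ continuous g t).
    { intros t _. split; eapply is_derive_cont; apply Hd. }
    destruct (invariance r Hr1 HB f g t0 p q Ht0 Hp Hq Hf0 Hg0 Hcont) as [P [HP Hinv]].
    { intros t Ht A1 A0 A2 A3. destruct (Heq t Ht ltac:(lra) ltac:(lra)) as [E1 E2].
      rewrite <- E1, <- E2. apply Hd. }
    intros t Ht. destruct (Hinv t Ht) as [I1 [I2 [I3 I4]]].
    destruct (Heq t Ht ltac:(lra) ltac:(lra)) as [E1 E2].
    destruct (Hd t) as [D1 D2]. rewrite E1 in D1. rewrite E2 in D2.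
    unfold Fp in D1. unfold Fm in D2.
    rewrite <- (rhs1 r Hr1 t (f t) (g t)) in D1 by lra.
    rewrite <- (rhs2 r Hr1 t (f t) (g t)) in D2 by lra.
    split; auto.
  - intros fp fm Hfp0 Hfm0 Hsol.
    assert (Hder : forall t, t0 <= t -> is_derive fp t (Fp r fp fm t) /\ is_derive fm t (Fm r fp fm t)).
    { intros t Ht. apply Hconv. lra. apply Hsol; auto. }
    assert (Hcont : forall t, t0 <= t -> continuous fp t /\ continuous fm t).
    { intros t Ht. destruct (Hder t Ht). split; eapply is_derive_cont; eauto. }
    destruct (invariance r Hr1 HB fp fm t0 p q Ht0 Hp Hq Hfp0 Hfm0 Hcont) as [P [HP Hinv]].
    { intros t Ht _ _ _ _. apply Hder; auto. }
    apply (final r fp fm t0 q P Hr1 HB Ht0 HP ltac:(lra) Hinv Hder).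
Qed.
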